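(* Let $\mathsf{V}$ be a variety of $\mathcal{L}$-algebras that has equationally definable principal congruences. If $\mathsf{V}$ is coherent and has the amalgamation property and the equational variable restriction property, then $\mathrm{Th}(\mathsf{V})$ has a model completion.
   Context: $\mathcal{L}$ is an algebraic first-order language with at least one constant symbol $c$; $\bot$ is $\neg(c\approx c)$. $\mathsf{V}\models\alpha$ means all members satisfy $\alpha$ under all assignments. A model completion of a theory $T$ is a model complete theory $T^*$ with the same universal consequences as $T$ such that for every model $M$ of $T$, $T^*$ plus the diagram of $M$ is complete. Equationally definable principal congruences: there is a conjunction of equations $\alpha(x_1,x_2,y_1,y_2)$ such that for all $\mathbf{A}\in\mathsf{V}$ and $a_1,a_2,b_1,b_2\in A$, $(a_1,a_2)$ lies in the congruence of $\mathbf{A}$ generated by $(b_1,b_2)$ iff $\mathbf{A}\models\alpha(a_1,a_2,b_1,b_2)$. Coherent: every finitely generated subalgebra of a finitely presented member of $\mathsf{V}$ is finitely presented. Amalgamation property: for $\mathbf{A},\mathbf{B},\mathbf{C}\in\mathsf{V}$ and embeddings $f\colon\mathbf{A}\to\mathbf{B}$, $g\colon\mathbf{A}\to\mathbf{C}$ there are $\mathbf{D}\in\mathsf{V}$ and embeddings $h,k$ with $hf=kg$. Equational variable restriction property: for every finite set of variables $\overline{x}$, variable $y\notin\overline{x}$ and conjunction of equations $\gamma(\overline{x},y)$, there is a formula $\pi(\overline{x})$ that is either $\bot$ or a conjunction of equations with $\mathsf{V}\models\pi\to\gamma$ and such that for every conjunction of equations $\varphi(\overline{x})$, $\mathsf{V}\models\varphi\to\gamma$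 implies $\mathsf{V}\models\varphi\to\pi$. *)

(* Defs.v *)
From mathcomp Require Import all_boot.
From Stdlib Require List.

Unset Implicit Arguments.
Unset Strict Implicit.
Unset Printing Implicit Defensive.

Section FOL.

Variable F : Type.
Variable ar : F -> nat.

Record algebra := Algebra {
  carrier :> Type;
  ops : forall f : F, ('I_(ar f) -> carrier) -> carrier }.
Arguments ops a f _ : clear implicits.

(* ---------------- terms and formulas ----------------
   Terms over variables indexed by nat, with extra constant symbols from C
   (C = void gives L-terms, C = carrier M gives L(M)-terms for diagrams). *)
Inductive term (C : Type) : Type :=
| Var of nat
| Cst of C
| App (f : F) of ('I_(ar f) -> term C).
Arguments Var {C}.
Arguments Cst {C}.
Arguments App {C} f _.

Inductive form (C : Type) : Type :=
| FEq of term C & term C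
| FNot of form C
| FAnd of form C & form C
| FOr of form C & form C
| FImp of form C & form C
| FAll of nat & form C
| FEx of nat & form C.
Arguments FEq {C}. Arguments FNot {C}. Arguments FAnd {C}. Arguments FOr {C}.
Arguments FImp {C}. Arguments FAll {C}. Arguments FEx {C}.

Definition eqn := (term void * term void)%type.

Fixpoint tmap {C D : Type} (g : C -> D) (t : term C) : term D :=
  match t with
  | Var n => Var n
  | Cst k => Cst (g k)
  | App f args => App f (fun i => tmap g (args i))
  end.

Fixpoint fmap {C D : Type} (g : C -> D) (p : form C) : form D :=
  match p with
  | FEq t1 t2 => FEq (tmap g t1) (tmap g t2)
  | FNot q => FNot (fmap g q)
  | FAnd q r => FAnd (fmap g q) (fmap g r)
  | FOr q r => FOr (fmap g q) (fmap g r)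
  | FImp q r => FImp (fmap g q) (fmap g r)
  | FAll n q => FAll n (fmap g q)
  | FEx n q => FEx n (fmap g q)
  end.

Fixpoint toccurs {C : Type} (n : nat) (t : term C) : Prop :=
  match t with
  | Var m => m = n
  | Cst _ => False
  | App f args => exists i, toccurs n (args i)
  end.

Fixpoint ffree {C : Type} (n : nat) (p : form C) : Prop :=
  match p with
  | FEq t1 t2 => toccurs n t1 \/ toccurs n t2
  | FNot q => ffree n q
  | FAnd q r | FOr q r | FImp q r => ffree n q \/ ffree n r
  | FAll m q | FEx m q => m <> n /\ ffree n q
  end.

Definition sentence {C : Type} (p : form C) : Prop := forall n, ~ ffree n p.

Fixpoint qfree {C : Type} (p : form C) : Prop :=
  match p with
  | FEq _ _ => True
  | FNot q => qfree q
  | FAnd q r | FOr q r | FImp q r => qfree q /\ qfree r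
  | FAll _ _ | FEx _ _ => False
  end.

Inductive universal {C : Type} : form C -> Prop :=
| univ_qf p : qfree p -> universal p
| univ_all n p : universal p -> universal (FAll n p).

Definition tvars_in {C : Type} (X : nat -> Prop) (t : term C) : Prop :=
  forall n, toccurs n t -> X n.
Definition eqns_vars_in (X : nat -> Prop) (E : seq eqn) : Prop :=
  forall p, List.In p E -> tvars_in X p.1 /\ tvars_in X p.2.

(* a conjunction of equations (the empty conjunction is x0 = x0, i.e. true) *)
Definition conj_eqs (E : seq eqn) : form void :=
  foldr (fun p q => FAnd (FEq (tmap id p.1) (tmap id p.2)) q)
        (FEq (Var 0) (Var 0)) E.

Section Semantics.
Variable A : algebra.
Variable C : Type.
Variable kappa : C -> A.

Fixpoint eval (v : nat -> A) (t : term C) : A :=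
  match t with
  | Var n => v n
  | Cst k => kappa k
  | App f args => ops A f (fun i => eval v (args i))
  end.

Definition upd (v : nat -> A) (n : nat) (a : A) : nat -> A :=
  fun m => if m == n then a else v m.

Fixpoint sat (v : nat -> A) (p : form C) : Prop :=
  match p with
  | FEq t1 t2 => eval v t1 = eval v t2
  | FNot q => ~ sat v q
  | FAnd q r => sat v q /\ sat v r
  | FOr q r => sat v q \/ sat v r
  | FImp q r => sat v q -> sat v r
  | FAll n q => forall a, sat (upd v n a) q
  | FEx n q => exists a, sat (upd v n a) q
  end.

End Semantics.
Arguments eval {A C} kappa v t.
Arguments upd {A} v n a.
Arguments sat {A C} kappa v p.

Definition novoid (A : Type) : void -> A := fun x => match x with end.

Definition models_th {C : Type} (T : form C -> Prop) (A : algebra)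
  (kappa : C -> A) : Prop :=
  forall p, T p -> forall v, sat kappa v p.

Definition entails {C : Type} (T : form C -> Prop) (p : form C) : Prop :=
  forall (A : algebra) (kappa : C -> A), models_th T A kappa ->
    forall v, sat kappa v p.

Definition complete_th {C : Type} (T : form C -> Prop) : Prop :=
  (exists (A : algebra) (kappa : C -> A), models_th T A kappa) /\
  forall p, sentence p -> entails T p \/ entails T (FNot p).

Definition hom {A B : algebra} (h : A -> B) : Prop :=
  forall f (args : 'I_(ar f) -> A), h (ops A f args) = ops B f (fun i => h (args i)).

Definition embedding {A B : algebra} (h : A -> B) : Prop :=
  hom h /\ injective h.

Definition elementary {A B : algebra} (h : A -> B) : Prop :=
  forall (p : form void) (v : nat -> A),
    sat (novoid A) v p <-> sat (novoid B) (fun n => h (v n)) p.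

Definition Lmodel (T : form void -> Prop) (A : algebra) : Prop :=
  models_th T A (novoid A).

Definition model_complete (T : form void -> Prop) : Prop :=
  forall (A B : algebra) (h : A -> B),
    Lmodel T A -> Lmodel T B -> embedding h -> elementary h.

Definition diagram (M : algebra) : form M -> Prop :=
  fun p => sentence p /\
    (exists t1 t2, p = FEq t1 t2 \/ p = FNot (FEq t1 t2)) /\
    forall v, sat (fun x : M => x) v p.

Definition th_plus_diagram (T : form void -> Prop) (M : algebra) : form M -> Prop :=
  fun p => (exists q, T q /\ p = fmap (novoid M) q) \/ diagram M p.

Definition model_completion (T Ts : form void -> Prop) : Prop :=
  (forall p, Ts p -> sentence p) /\
  model_complete Ts /\
  (forall p, sentence p -> universal p -> (entails T p <-> entails Ts p)) /\
  (forall M : algebra, Lmodel T M -> complete_th (th_plus_diagram Ts M)).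

Definition has_model_completion (T : form void -> Prop) : Prop :=
  exists Ts, model_completion T Ts.

Definition eqn_holds {A : algebra} (v : nat -> A) (p : eqn) : Prop :=
  eval (novoid A) v p.1 = eval (novoid A) v p.2.

Definition is_variety (V : algebra -> Prop) : Prop :=
  exists Eqs : eqn -> Prop,
    forall A, V A <-> (forall p, Eqs p -> forall v : nat -> A, eqn_holds v p).

Definition Vmodels (V : algebra -> Prop) (p : form void) : Prop :=
  forall A, V A -> forall v, sat (novoid A) v p.

Definition ThV (V : algebra -> Prop) : form void -> Prop :=
  fun p => sentence p /\ Vmodels V p.

Definition congruence {A : algebra} (th : A -> A -> Prop) : Prop :=
  (forall a, th a a) /\ (forall a b, th a b -> th b a) /\
  (forall a b d, th a b -> th b d -> th a d) /\
  (forall f (a b : 'I_(ar f) -> A), (forall i, th (a i) (b i)) ->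
     th (ops A f a) (ops A f b)).

Definition in_Cg {A : algebra} (b1 b2 a1 a2 : A) : Prop :=
  forall th, congruence th -> th b1 b2 -> th a1 a2.

Definition EDPC (V : algebra -> Prop) : Prop :=
  exists alpha : seq eqn,
    eqns_vars_in (fun n => n < 4) alpha /\
    forall A, V A -> forall a1 a2 b1 b2 : A,
      in_Cg b1 b2 a1 a2 <->
      sat (novoid A) (fun n => nth a1 [:: a1; a2; b1; b2] n) (conj_eqs alpha).

Inductive gen {A : algebra} (S : A -> Prop) : A -> Prop :=
| gen_base x : S x -> gen S x
| gen_op f (args : 'I_(ar f) -> A) :
    (forall i, gen S (args i)) -> gen S (ops A f args).

Definition subalg {A : algebra} (S : A -> Prop) : algebra :=
  @Algebra {x : A | gen S x}
    (fun f args => exist _ (ops A f (fun i => proj1_sig (args i)))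
                          (@gen_op A S f _ (fun i => proj2_sig (args i)))).

Definition first_n {A : Type} (n : nat) (g : nat -> A) : A -> Prop :=
  fun y => exists2 i, i < n & y = g i.

Definition fin_pres (V : algebra -> Prop) (A : algebra) : Prop :=
  V A /\
  exists (n : nat) (E : seq eqn) (g : nat -> A),
    eqns_vars_in (fun m => m < n) E /\
    (forall p, List.In p E -> eqn_holds g p) /\
    (forall x, gen (first_n n g) x) /\
    (forall B : algebra, V B -> forall w : nat -> B,
       (forall p, List.In p E -> eqn_holds w p) ->
       exists h : A -> B, hom h /\ forall i, i < n -> h (g i) = w i).

Definition coherent (V : algebra -> Prop) : Prop :=
  forall A, fin_pres V A ->
    forall (n : nat) (g : nat -> A), fin_pres V (subalg (first_n n g)).

Definition AP (V : algebra -> Prop) : Prop :=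
  forall (A B C : algebra) (f : A -> B) (g : A -> C),
    V A -> V B -> V C -> embedding f -> embedding g ->
    exists (D : algebra) (h : B -> D) (k : C -> D),
      V D /\ embedding h /\ embedding k /\ forall a, h (f a) = k (g a).

Section Bot.
Variable c : F.
Hypothesis hc : ar c = 0.

Lemma ord_ar0 : 'I_(ar c) -> False.
Proof. by case=> i; rewrite hc. Qed.

Definition cterm : term void := App c (fun i => False_rect _ (ord_ar0 i)).

Definition fbot : form void := FNot (FEq cterm cterm).

Definition EVRP (V : algebra -> Prop) : Prop :=
  forall (xs : seq nat) (y : nat) (gamma : seq eqn),
    ~ List.In y xs ->
    eqns_vars_in (fun m => List.In m (y :: xs)) gamma ->
    exists pi : form void,
      (pi = fbot \/ exists E, eqns_vars_in (fun m => List.In m xs) E /\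
                              pi = conj_eqs E) /\
      Vmodels V (FImp pi (conj_eqs gamma)) /\
      forall phi : seq eqn, eqns_vars_in (fun m => List.In m xs) phi ->
        Vmodels V (FImp (conj_eqs phi) (conj_eqs gamma)) ->
        Vmodels V (FImp (conj_eqs phi) pi).
End Bot.

End FOL.

(* Main.v *)
Require Import Defs.
From mathcomp Require Import all_boot.
From Stdlib Require Import Classical ClassicalEpsilon FunctionalExtensionality PropExtensionality ProofIrrelevance.
From Stdlib Require List Eqdep_dec PeanoNat.

Set Implicit Arguments.
Unset Strict Implicit.
Unset Printing Implicit Defensive.


Lemma In_mem (T : eqType) (x : T) (s : seq T) : List.In x s <-> x \in s.
Proof.
elim: s => [|y s IH] //=; rewrite in_cons; split.
- by case=> [->|/IH ->]; rewrite ?eqxx ?orbT.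
- by case/orP=> [/eqP ->|/IH]; [left|right].
Qed.

Lemma In_enum_ord n (i : 'I_n) : List.In i (enum 'I_n).
Proof. by apply/In_mem; rewrite mem_enum. Qed.

Lemma choice_fun (I T : Type) (P : I -> T -> Prop) :
  (forall i, exists x, P i x) -> exists f : I -> T, forall i, P i (f i).
Proof.
move=> H; exists (fun i => proj1_sig (constructive_indefinite_description _ (H i))).
move=> i; exact: (proj2_sig (constructive_indefinite_description _ (H i))).
Qed.

Section Basics.
Variable F : Type.
Variable ar : F -> nat.

Local Notation alg := (Defs.algebra F ar).
Local Notation term := (Defs.term F ar).
Local Notation form := (Defs.form F ar).
Local Notation eqn := (Defs.eqn F ar).
Local Notation Var := (@Defs.Var F ar _).
Local Notation Cst := (@Defs.Cst F ar _).
Local Notation App := (@Defs.App F ar _).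
Local Notation eval := (Defs.eval F ar _ _).
Local Notation sat := (Defs.sat F ar _ _).
Local Notation ops := (Defs.ops F ar).
Local Notation upd := (Defs.upd F ar _).
Local Notation hom := (Defs.hom F ar).
Local Notation embedding := (Defs.embedding F ar).
Local Notation toccurs := (Defs.toccurs F ar).
Local Notation ffree := (Defs.ffree F ar).
Local Notation qfree := (Defs.qfree F ar).
Local Notation conj_eqs := (Defs.conj_eqs F ar).
Local Notation eqn_holds := (Defs.eqn_holds F ar).

Lemma upd_same (A : alg) (v : nat -> A) n a : upd v n a n = a.
Proof. by rewrite /Defs.upd eqxx. Qed.
Lemma upd_other (A : alg) (v : nat -> A) n a m : m <> n -> upd v n a m = v m.
Proof. by move=> H; rewrite /Defs.upd; case: eqP. Qed.

Lemma eval_ext (A : alg) C (k : C -> A) v w (t : term C) :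
  (forall n, toccurs n t -> v n = w n) -> eval k v t = eval k w t.
Proof.
elim: t => [n|x|f args IH] /= H; first exact: H.
- by [].
- congr (ops A f); apply: functional_extensionality => i.
  apply: IH => n Hn; apply: H; by exists i.
Qed.

Lemma eval_kappa_ext (A : alg) C (k k' : C -> A) v (t : term C) :
  (forall x, k x = k' x) -> eval k v t = eval k' v t.
Proof.
move=> H; elim: t => [n|x|f args IH] //=.
congr (ops A f); apply: functional_extensionality => i; exact: IH.
Qed.

Lemma eval_void (A : alg) (k k' : void -> A) v (t : term void) :
  eval k v t = eval k' v t.
Proof. by apply: eval_kappa_ext; case. Qed.

Lemma sat_ext (A : alg) C (k : C -> A) (p : form C) : forall v w,
  (forall n, ffree n p -> v n = w n) -> (sat k v p <-> sat k w p).
Proof.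
elim: p => [t1 t2|q IH|q IHq r IHr|q IHq r IHr|q IHq r IHr|n q IH|n q IH] v w H /=.
- rewrite (eval_ext k (w:=w) (t:=t1)); last by move=> m Hm; apply: H; left.
  by rewrite (eval_ext k (w:=w) (t:=t2)) //; move=> m Hm; apply: H; right.
- by rewrite (IH v w H).
- by rewrite (IHq v w) ?(IHr v w) // => m Hm; apply: H; [right|left].
- by rewrite (IHq v w) ?(IHr v w) // => m Hm; apply: H; [right|left].
- by rewrite (IHq v w) ?(IHr v w) // => m Hm; apply: H; [right|left].
- split=> K a.
  + apply/(IH (upd v n a)); last exact: K.
    move=> m Hm; rewrite /Defs.upd; case: eqP => // /eqP Hmn.
    apply: H; split=> //; apply/eqP; by rewrite eq_sym.
  + apply/(IH (upd v n a)); last exact: K.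
    move=> m Hm; rewrite /Defs.upd; case: eqP => // /eqP Hmn.
    apply: H; split=> //; apply/eqP; by rewrite eq_sym.
- split=> -[a K]; exists a.
  + apply/(IH (upd v n a)); last exact: K.
    move=> m Hm; rewrite /Defs.upd; case: eqP => // /eqP Hmn.
    apply: H; split=> //; apply/eqP; by rewrite eq_sym.
  + apply/(IH (upd v n a)); last exact: K.
    move=> m Hm; rewrite /Defs.upd; case: eqP => // /eqP Hmn.
    apply: H; split=> //; apply/eqP; by rewrite eq_sym.
Qed.

Lemma sat_kappa_ext (A : alg) C (k k' : C -> A) (p : form C) v :
  (forall x, k x = k' x) -> (sat k v p <-> sat k' v p).
Proof.
move=> H; elim: p v => [t1 t2|q IH|q IHq r IHr|q IHq r IHr|q IHq r IHr|n q IH|n q IH] v /=.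
- by rewrite !(eval_kappa_ext _ _ H).
- by rewrite IH.
- by rewrite IHq IHr.
- by rewrite IHq IHr.
- by rewrite IHq IHr.
- by split=> K a; apply/IH.
- by split=> -[a K]; exists a; apply/IH.
Qed.

Lemma sat_void (A : alg) (k k' : void -> A) (p : form void) v :
  sat k v p <-> sat k' v p.
Proof. by apply: sat_kappa_ext; case. Qed.

Lemma hom_eval (A B : alg) (h : A -> B) C (k : C -> A) (k' : C -> B) v (t : term C) :
  hom h -> (forall x, h (k x) = k' x) -> h (eval k v t) = eval k' (fun n => h (v n)) t.
Proof.
move=> Hh Hk; elim: t => [n|x|f args IH] //=.
rewrite Hh; congr (ops B f); apply: functional_extensionality => i; exact: IH.
Qed.

Lemma hom_eval_void (A B : alg) (h : A -> B) v (t : term void) :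
  hom h -> h (eval (novoid A) v t) = eval (novoid B) (fun n => h (v n)) t.
Proof. by move=> Hh; apply: hom_eval => //; case. Qed.

Lemma emb_qf (A B : alg) (h : A -> B) C (k : C -> A) (k' : C -> B) v (p : form C) :
  embedding h -> (forall x, h (k x) = k' x) -> qfree p ->
  (sat k v p <-> sat k' (fun n => h (v n)) p).
Proof.
case=> Hh Hi Hk; elim: p => [t1 t2|q IH|q IHq r IHr|q IHq r IHr|q IHq r IHr|n q IH|n q IH] //=.
- rewrite -!(hom_eval _ _ Hh Hk); split; [by move->|exact: Hi].
- by move=> /IH ->.
- by case=> /IHq -> /IHr ->.
- by case=> /IHq -> /IHr ->.
- by case=> /IHq -> /IHr ->.
Qed.

Lemma tmap_id C (t : term C) : tmap F ar id t = t.
Proof.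
elim: t => [n|x|f args IH] //=; congr (App f); exact: functional_extensionality.
Qed.

Lemma conj_eqs_sat (A : alg) (k : void -> A) v (E : seq eqn) :
  sat k v (conj_eqs E) <-> (forall p, List.In p E -> eqn_holds v p).
Proof.
elim: E => [|p E IH] /=; first by split.
rewrite !tmap_id IH /Defs.eqn_holds; split.
- by case=> H1 H2 q [<-|Hq]; [rewrite !(eval_void _ k)|apply: H2].
- move=> H; split; last by move=> q Hq; apply: H; right.
  by rewrite !(eval_void _ (novoid A)); apply: H; left.
Qed.

Definition TA (X : Type) : alg := @Defs.Algebra F ar (term X) (fun f args => App f args).

Lemma eval_hom (A : alg) X (k : X -> A) v : hom (fun t : TA X => eval k v t).
Proof. by []. Qed.

Lemma eval_TA_comp (A : alg) X (k : X -> A) w (sg : nat -> TA X) (t : term void) :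
  eval k w (eval (novoid (TA X)) sg t) = eval (novoid A) (fun n => eval k w (sg n)) t.
Proof. by apply: hom_eval_void; apply: eval_hom. Qed.

Lemma eval_TA_var X (t : term void) :
  eval (novoid (TA X)) (fun n => Var n) t = tmap F ar (novoid X) t.
Proof. elim: t => [n|[]|f args IH] //=; congr (App f); exact: functional_extensionality. Qed.

Inductive cg (A : alg) (G : A -> A -> Prop) : A -> A -> Prop :=
| cg_base a b : G a b -> cg G a b
| cg_refl a : cg G a a
| cg_sym a b : cg G a b -> cg G b a
| cg_trans a b d : cg G a b -> cg G b d -> cg G a d
| cg_app f (x y : 'I_(ar f) -> A) : (forall i, cg G (x i) (y i)) -> cg G (ops A f x) (ops A f y).

Lemma cg_congr (A : alg) (G : A -> A -> Prop) : congruence F ar (cg G).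
Proof.
split; first exact: cg_refl. split; first exact: cg_sym.
split; first exact: cg_trans. exact: cg_app.
Qed.

Lemma cg_least (A : alg) (G : A -> A -> Prop) (th : A -> A -> Prop) :
  congruence F ar th -> (forall a b, G a b -> th a b) -> forall a b, cg G a b -> th a b.
Proof.
case=> Hr [Hs [Ht Hc]] HG a b; elim=> //.
- by move=> ? ? _; apply: Hs.
- by move=> ? ? ? _ H1 _ H2; apply: Ht H2.
- by move=> f x y _ H; apply: Hc.
Qed.

Lemma cg_mono (A : alg) (G G' : A -> A -> Prop) :
  (forall a b, G a b -> G' a b) -> forall a b, cg G a b -> cg G' a b.
Proof. move=> H; apply: cg_least; [exact: cg_congr|by move=> a b /H; apply: cg_base]. Qed.

Lemma in_Cg_cg (A : alg) (b1 b2 a1 a2 : A) :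
  in_Cg F ar b1 b2 a1 a2 <-> cg (fun x y => x = b1 /\ y = b2) a1 a2.
Proof.
split.
- by move=> H; apply: H; [exact: cg_congr|apply: cg_base].
- move=> H th Hth Hb; apply: (cg_least Hth) H => x y [-> ->] //.
Qed.

Lemma ker_congr (A B : alg) (h : A -> B) : hom h -> congruence F ar (fun x y => h x = h y).
Proof.
move=> Hh; split=> //; split; first by move=> ? ? ->.
split; first by move=> ? ? ? -> ->.
move=> f a b H; rewrite !Hh; congr (ops B f); exact: functional_extensionality.
Qed.

Lemma cg_sound (A B : alg) (h : A -> B) (G : A -> A -> Prop) :
  hom h -> (forall a b, G a b -> h a = h b) -> forall a b, cg G a b -> h a = h b.
Proof. by move=> Hh HG; apply: cg_least => //; apply: ker_congr. Qed.

Lemma cg_eq (A : alg) (G : A -> A -> Prop) :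
  (forall a b, G a b -> a = b) -> forall a b, cg G a b -> a = b.
Proof.
move=> H; apply: (@cg_least A G (fun x y => x = y)) => //.
split=> //; split; first by move=> ? ? ->. split; first by move=> ? ? ? -> ->.
by move=> f a b K; congr (ops A f); exact: functional_extensionality.
Qed.

Lemma cg_fin (A : alg) (G1 G2 : A -> A -> Prop) a b :
  cg (fun x y => G1 x y \/ G2 x y) a b ->
  exists L : seq (A * A), (forall p, List.In p L -> G2 p.1 p.2) /\
     cg (fun x y => G1 x y \/ List.In (x, y) L) a b.
Proof.
elim.
- move=> x y [H|H]; first by exists [::]; split=> //; apply: cg_base; left.
  by exists [:: (x, y)]; split; [move=> p [<-|]|apply: cg_base; right; left].
- by move=> x; exists [::]; split=> //; apply: cg_refl.
- by move=> x y _ [L [HL H]]; exists L; split=> //; apply: cg_sym.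
- move=> x y z _ [L1 [HL1 H1]] _ [L2 [HL2 H2]]; exists (L1 ++ L2); split.
  + by move=> p Hp; case: (List.in_app_or _ _ _ Hp) => [/HL1|/HL2].
  + apply: (@cg_trans _ _ x y z).
    * apply: (cg_mono _ H1) => u w [K|K]; [by left|by right; apply: List.in_or_app; left].
    * apply: (cg_mono _ H2) => u w [K|K]; [by left|by right; apply: List.in_or_app; right].
- move=> f x y _ IH.
  have [Lf HLf] : exists Lf : 'I_(ar f) -> seq (A * A), forall i,
      (forall p, List.In p (Lf i) -> G2 p.1 p.2) /\
      cg (fun u w => G1 u w \/ List.In (u, w) (Lf i)) (x i) (y i).
    exists (fun i => proj1_sig (constructive_indefinite_description _ (IH i))).
    move=> i; exact: (proj2_sig (constructive_indefinite_description _ (IH i))).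
  exists (List.flat_map Lf (enum 'I_(ar f))); split.
  + move=> p /List.in_flat_map [i [_ Hi]]; exact: (proj1 (HLf i)).
  + apply: cg_app => i; apply: (cg_mono _ (proj2 (HLf i))) => u w [K|K]; first by left.
    right; apply/List.in_flat_map; exists i; split=> //; exact: In_enum_ord.
Qed.

End Basics.


Section Quot.
Variable F : Type.
Variable ar : F -> nat.

Local Notation alg := (Defs.algebra F ar).
Local Notation term := (Defs.term F ar).
Local Notation form := (Defs.form F ar).
Local Notation eqn := (Defs.eqn F ar).
Local Notation Var := (@Defs.Var F ar _).
Local Notation Cst := (@Defs.Cst F ar _).
Local Notation App := (@Defs.App F ar _).
Local Notation eval := (Defs.eval F ar _ _).
Local Notation sat := (Defs.sat F ar _ _).
Local Notation ops := (Defs.ops F ar).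
Local Notation upd := (Defs.upd F ar _).
Local Notation hom := (Defs.hom F ar).
Local Notation embedding := (Defs.embedding F ar).

Variable A : alg.
Variable th : A -> A -> Prop.
Hypothesis Hth : congruence F ar th.

Definition qcar := {P : A -> Prop | exists a, P = th a}.
Definition qpi (a : A) : qcar := exist _ (th a) (ex_intro _ a erefl).
Definition qrep (x : qcar) : A := proj1_sig (constructive_indefinite_description _ (proj2_sig x)).

Lemma qrepK x : qpi (qrep x) = x.
Proof.
case: x => P HP; rewrite /qpi /qrep /=.
case: (constructive_indefinite_description _ HP) => a /= Ha.
subst P; congr exist; exact: proof_irrelevance.
Qed.

Lemma qpi_eq a b : qpi a = qpi b <-> th a b.
Proof.
case: Hth => Hr [Hs [Ht Hc]]; split.
- move=> H; have : th a = th b by case: H.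
  by move=> E; move: (Hr b); rewrite -E.
- move=> H; rewrite /qpi; have E : th a = th b.
    apply: functional_extensionality => z; apply: propositional_extensionality.
    by split=> K; [apply: Ht (Hs _ _ H) K|apply: Ht H K].
  move: (ex_intro _ a erefl : exists a0, th a = th a0) (ex_intro _ b erefl : exists a0, th b = th a0).
  rewrite E => p1 p2; congr exist; exact: proof_irrelevance.
Qed.

Lemma qrep_th a : th (qrep (qpi a)) a.
Proof. by apply/qpi_eq; rewrite qrepK. Qed.

Definition qalg : alg :=
  @Defs.Algebra F ar qcar (fun f args => qpi (ops A f (fun i => qrep (args i)))).

Lemma qpi_hom : hom (qpi : A -> qalg).
Proof.
move=> f args /=; apply/qpi_eq; case: Hth => Hr [Hs [Ht Hc]].
apply: Hc => i; apply: Hs; exact: qrep_th.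
Qed.

Lemma qpi_surj (x : qalg) : exists a, x = qpi a.
Proof. by exists (qrep x); rewrite qrepK. Qed.

Section Lift.
Variable B : alg.
Variable g : A -> B.
Hypothesis Hg : hom g.
Hypothesis Hk : forall a b, th a b -> g a = g b.
Definition qlift (x : qalg) : B := g (qrep x).
Lemma qlift_pi a : qlift (qpi a) = g a.
Proof. exact: Hk (qrep_th a). Qed.
Lemma qlift_hom : hom qlift.
Proof.
move=> f args; rewrite /qlift /= (Hk (qrep_th _)) Hg.
by congr (ops B f).
Qed.
End Lift.

End Quot.

Section Variety.
Variable F : Type.
Variable ar : F -> nat.

Local Notation alg := (Defs.algebra F ar).
Local Notation term := (Defs.term F ar).
Local Notation form := (Defs.form F ar).
Local Notation eqn := (Defs.eqn F ar).
Local Notation Var := (@Defs.Var F ar _).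
Local Notation Cst := (@Defs.Cst F ar _).
Local Notation App := (@Defs.App F ar _).
Local Notation eval := (Defs.eval F ar _ _).
Local Notation sat := (Defs.sat F ar _ _).
Local Notation ops := (Defs.ops F ar).
Local Notation upd := (Defs.upd F ar _).
Local Notation hom := (Defs.hom F ar).
Local Notation embedding := (Defs.embedding F ar).
Local Notation eqn_holds := (Defs.eqn_holds F ar).

Variable V : alg -> Prop.
Variable Eqs : eqn -> Prop.
Hypothesis HV : forall A, V A <-> (forall p, Eqs p -> forall v : nat -> A, eqn_holds v p).

Lemma V_eqs (A : alg) p (v : nat -> A) : V A -> Eqs p -> eqn_holds v p.
Proof. by move/HV=> H /H. Qed.

Lemma V_emb (A B : alg) (h : A -> B) : hom h -> injective h -> V B -> V A.
Proof.
move=> Hh Hi HB; apply/HV => p Hp v; apply: Hi; rewrite /Defs.eqn_holds.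
rewrite !hom_eval_void //; exact: V_eqs.
Qed.

Lemma V_quot (A : alg) (th : A -> A -> Prop) (Hth : congruence F ar th) :
  (forall p (w : nat -> A), Eqs p -> th (eval (novoid A) w p.1) (eval (novoid A) w p.2)) ->
  V (qalg th).
Proof.
move=> H; apply/HV => p Hp v.
have -> : v = fun n => qpi th (qrep (v n)) by apply: functional_extensionality => n; rewrite qrepK.
rewrite /Defs.eqn_holds -!(hom_eval_void _ _ (qpi_hom Hth)); apply/(qpi_eq Hth); exact: H _ _ Hp.
Qed.

Lemma V_quotV (A : alg) (th : A -> A -> Prop) (Hth : congruence F ar th) :
  V A -> V (qalg th).
Proof.
move=> HA; apply: (V_quot Hth) => p w Hp; rewrite (V_eqs w HA Hp); by case: Hth.
Qed.

Lemma val_hom (A : alg) (S : A -> Prop) : hom (fun x : subalg F ar S => proj1_sig x).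
Proof. by []. Qed.

Lemma sval_inj (A : alg) (S : A -> Prop) : injective (fun x : subalg F ar S => proj1_sig x).
Proof. move=> [x Hx] [y Hy] /= E; subst y; congr exist; exact: proof_irrelevance. Qed.

Lemma V_subalg (A : alg) (S : A -> Prop) : V A -> V (subalg F ar S).
Proof. by apply: V_emb; [apply: val_hom|apply: sval_inj]. Qed.

End Variety.


Section EDPCiter.
Variable F : Type.
Variable ar : F -> nat.

Local Notation alg := (Defs.algebra F ar).
Local Notation term := (Defs.term F ar).
Local Notation form := (Defs.form F ar).
Local Notation eqn := (Defs.eqn F ar).
Local Notation Var := (@Defs.Var F ar _).
Local Notation Cst := (@Defs.Cst F ar _).
Local Notation App := (@Defs.App F ar _).
Local Notation eval := (Defs.eval F ar _ _).
Local Notation sat := (Defs.sat F ar _ _).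
Local Notation ops := (Defs.ops F ar).
Local Notation upd := (Defs.upd F ar _).
Local Notation hom := (Defs.hom F ar).
Local Notation embedding := (Defs.embedding F ar).
Local Notation eqn_holds := (Defs.eqn_holds F ar).
Local Notation toccurs := (Defs.toccurs F ar).
Local Notation tvars_in := (Defs.tvars_in F ar).
Local Notation eqns_vars_in := (Defs.eqns_vars_in F ar).
Local Notation conj_eqs := (Defs.conj_eqs F ar).

Lemma cg_quot (B : alg) (G : B -> B -> Prop) (a1 a2 x y : B) :
  cg (fun X Y : qalg (cg G) => X = qpi (cg G) a1 /\ Y = qpi (cg G) a2) (qpi (cg G) x) (qpi (cg G) y)
  <-> cg (fun u w => G u w \/ (u = a1 /\ w = a2)) x y.
Proof.
have Hc := cg_congr G.
set G' := fun u w => G u w \/ (u = a1 /\ w = a2).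
have sub : forall u w, cg G u w -> cg G' u w by apply: cg_mono => u w K; left.
split.
- move=> H.
  pose th'' := fun X Y : qalg (cg G) => cg G' (qrep X) (qrep Y).
  have Hth : congruence F ar th''.
    split; first by move=> X; apply: cg_refl.
    split; first by move=> X Y; apply: cg_sym.
    split; first by move=> X Y Z; apply: cg_trans.
    move=> f X Y K; rewrite /th'' /=.
    apply: (cg_trans (sub _ _ (qrep_th Hc _))).
    apply: cg_sym; apply: (cg_trans (sub _ _ (qrep_th Hc _))).
    by apply: cg_app => i; apply: cg_sym; apply: K.
  have := cg_least Hth _ H.
  rewrite /th'' => K; have {}K := K (fun X Y => ltac:(case=> -> ->; rewrite /th'';
      apply: (cg_trans (sub _ _ (qrep_th Hc _)));
      apply: cg_sym; apply: (cg_trans (sub _ _ (qrep_th Hc _))); apply: cg_sym;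
      apply: cg_base; right; done)).
  apply: (cg_trans (cg_sym (sub _ _ (qrep_th Hc x)))).
  by apply: (cg_trans K); apply: sub; apply: qrep_th.
- move=> H.
  pose th' := fun u w => cg (fun X Y : qalg (cg G) => X = qpi (cg G) a1 /\ Y = qpi (cg G) a2)
                       (qpi (cg G) u) (qpi (cg G) w).
  have Hth : congruence F ar th'.
    split; first by move=> u; apply: cg_refl.
    split; first by move=> u w; apply: cg_sym.
    split; first by move=> u w z; apply: cg_trans.
    move=> f u w K; rewrite /th'; rewrite !(qpi_hom Hc); exact: cg_app.
  apply: (cg_least Hth) H => u w [K|[-> ->]]; last by apply: cg_base.
  rewrite /th'; have -> : qpi (cg G) u = qpi (cg G) w by apply/(qpi_eq Hc); apply: cg_base.
  exact: cg_refl.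
Qed.

Variable V : alg -> Prop.
Variable Eqs : eqn -> Prop.
Hypothesis HV : forall A, V A <-> (forall p, Eqs p -> forall v : nat -> A, eqn_holds v p).
Variable alpha : seq eqn.
Hypothesis Halpha_vars : eqns_vars_in (fun n => n < 4) alpha.
Hypothesis Halpha : forall A, V A -> forall a1 a2 b1 b2 : A,
      in_Cg F ar b1 b2 a1 a2 <->
      sat (novoid A) (fun n => nth a1 [:: a1; a2; b1; b2] n) (conj_eqs alpha).

Definition tsub (sg : nat -> term void) (t : term void) : term void :=
  eval (novoid (TA ar void)) sg t.

Definition ainst (s t l r : term void) : seq eqn :=
  [seq (tsub (fun n => nth s [:: s; t; l; r] n) e.1, tsub (fun n => nth s [:: s; t; l; r] n) e.2) | e <- alpha].

Fixpoint EPS (s t : term void) (L : seq eqn) : seq eqn :=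
  match L with
  | [::] => [:: (s, t)]
  | (l, r) :: L' => List.flat_map (fun e => EPS e.1 e.2 L') (ainst s t l r)
  end.

Definition GL (B : alg) (w : nat -> B) (L : seq eqn) : B -> B -> Prop :=
  fun x y => exists2 p, List.In p L & x = eval (novoid B) w p.1 /\ y = eval (novoid B) w p.2.

Lemma eval_tsub (B : alg) (w : nat -> B) sg t :
  eval (novoid B) w (tsub sg t) = eval (novoid B) (fun n => eval (novoid B) w (sg n)) t.
Proof. rewrite /tsub eval_TA_comp; apply: eval_void. Qed.

Lemma EPS_sem (B : alg) (w : nat -> B) L : V B -> forall s t,
  (forall p, List.In p (EPS s t L) -> eqn_holds w p) <->
  cg (GL w L) (eval (novoid B) w s) (eval (novoid B) w t).
Proof.
move=> HB; elim: L => [|[l r] L IH] s t /=.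
- split.
  + move=> H; rewrite (H (s, t)); [exact: cg_refl|by left].
  + move=> H q [<-|//]; rewrite /Defs.eqn_holds /=.
    by apply: cg_eq H => a b [p []].
- set ev := eval (novoid B) w.
  have Hc := cg_congr (GL w L).
  have HQ : V (qalg (cg (GL w L))) by apply: V_quotV.
  pose u : nat -> qalg (cg (GL w L)) := fun n => nth (qpi (cg (GL w L)) (ev s))
     [:: qpi (cg (GL w L)) (ev s); qpi (cg (GL w L)) (ev t); qpi (cg (GL w L)) (ev l); qpi (cg (GL w L)) (ev r)] n.
  have E1 : (forall p, List.In p (List.flat_map (fun e => EPS e.1 e.2 L) (ainst s t l r)) -> eqn_holds w p)
     <-> (forall e, List.In e alpha -> eqn_holds u e).
    split.
    + move=> H e He; rewrite /Defs.eqn_holds.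
      have Hv := Halpha_vars He.
      have X : forall z, tvars_in (fun n => n < 4) z ->
          eval (novoid (qalg (cg (GL w L)))) u z =
          qpi (cg (GL w L)) (ev (tsub (fun n => nth s [:: s; t; l; r] n) z)).
        move=> z Hz; rewrite /ev eval_tsub (hom_eval_void _ _ (qpi_hom Hc)).
        apply: eval_ext => n /Hz; rewrite /u.
        by case: n => [|[|[|[|n]]]].
      rewrite (X _ Hv.1) (X _ Hv.2); apply/(qpi_eq Hc); apply/IH => p Hp; apply: H.
      apply/List.in_flat_map; exists (tsub (fun n => nth s [:: s; t; l; r] n) e.1,
                                       tsub (fun n => nth s [:: s; t; l; r] n) e.2); split=> //.
      by apply: List.in_map.
    + move=> H p /List.in_flat_map [e' [/List.in_map_iff [e [<- He]] Hp]].
      move: p Hp; apply/IH; apply/(qpi_eq Hc).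
      have Hv := Halpha_vars He.
      have X : forall z, tvars_in (fun n => n < 4) z ->
          eval (novoid (qalg (cg (GL w L)))) u z =
          qpi (cg (GL w L)) (ev (tsub (fun n => nth s [:: s; t; l; r] n) z)).
        move=> z Hz; rewrite /ev eval_tsub (hom_eval_void _ _ (qpi_hom Hc)).
        apply: eval_ext => n /Hz; rewrite /u.
        by case: n => [|[|[|[|n]]]].
      by rewrite /= -(X _ Hv.1) -(X _ Hv.2); apply: H.
  rewrite E1 -(@conj_eqs_sat F ar _ (novoid _)) /u -Halpha // in_Cg_cg cg_quot.
  split=> K.
  + apply: (cg_mono _ K) => a b [[p Hp E]|[-> ->]]; first by exists p => //; right.
    by exists (l, r); [left|].
  + apply: (cg_mono _ K) => a b [p [<-|Hp] E]; last by left; exists p.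
    by right.
Qed.

Lemma toccurs_tsub sg t n : toccurs n (tsub sg t) -> exists2 m, toccurs m t & toccurs n (sg m).
Proof.
elim: t => [m|[]|f args IH] /=; first by move=> H; exists m.
case=> i /IH [m Hm Hn]; exists m => //; by exists i.
Qed.

Lemma EPS_vars (X : nat -> Prop) L : eqns_vars_in X L -> forall s t,
  tvars_in X s -> tvars_in X t -> eqns_vars_in X (EPS s t L).
Proof.
elim: L => [|[l r] L IH] HL s t Hs Ht /=.
- by move=> p [<-|].
- have HL' : eqns_vars_in X L by move=> p Hp; apply: HL; right.
  have [Hl Hr] : tvars_in X l /\ tvars_in X r by apply: (HL (l, r)); left.
  move=> p /List.in_flat_map [e' [/List.in_map_iff [e [<- He]] Hp]].
  have Hv := Halpha_vars He.
  have Y : forall z, tvars_in (fun n => n < 4) z -> tvars_in X (tsub (fun n => nth s [:: s; t; l; r] n) z).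
    move=> z Hz n /toccurs_tsub [m /Hz]; by case: m => [|[|[|[|m]]]] //= _ /=; [apply: Hs|apply: Ht|apply: Hl|apply: Hr].
  exact: (IH HL' _ _ (Y _ Hv.1) (Y _ Hv.2) p Hp).
Qed.

End EDPCiter.


Section Coh.
Variable F : Type.
Variable ar : F -> nat.

Local Notation alg := (Defs.algebra F ar).
Local Notation term := (Defs.term F ar).
Local Notation form := (Defs.form F ar).
Local Notation eqn := (Defs.eqn F ar).
Local Notation Var := (@Defs.Var F ar _).
Local Notation Cst := (@Defs.Cst F ar _).
Local Notation App := (@Defs.App F ar _).
Local Notation eval := (Defs.eval F ar _ _).
Local Notation sat := (Defs.sat F ar _ _).
Local Notation ops := (Defs.ops F ar).
Local Notation upd := (Defs.upd F ar _).
Local Notation hom := (Defs.hom F ar).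
Local Notation embedding := (Defs.embedding F ar).
Local Notation eqn_holds := (Defs.eqn_holds F ar).
Local Notation toccurs := (Defs.toccurs F ar).
Local Notation tvars_in := (Defs.tvars_in F ar).
Local Notation eqns_vars_in := (Defs.eqns_vars_in F ar).
Local Notation conj_eqs := (Defs.conj_eqs F ar).
Local Notation gen := (Defs.gen F ar).
Local Notation first_n := (Defs.first_n).

Variable c : F.
Hypothesis hc : ar c = 0.
Local Notation cterm := (Defs.cterm F ar c hc).

Lemma gen_term (A : alg) (k : nat) (v : nat -> A) a :
  gen (first_n k v) a -> exists2 u, tvars_in (fun n => n < k) u & eval (novoid A) v u = a.
Proof.
elim=> [x [i Hi ->]|f args _ IH].
- by exists (Var i) => //= n <-.
- have [uf Huf] : exists uf : 'I_(ar f) -> term void, forall i,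
      tvars_in (fun n => n < k) (uf i) /\ eval (novoid A) v (uf i) = args i.
    apply: (@choice_fun _ _ (fun i u => tvars_in (fun n => n < k) u /\ eval (novoid A) v u = args i)) => i.
    by case: (IH i) => u H1 H2; exists u.
  exists (App f uf); first by move=> n [i /(proj1 (Huf i))].
  by rewrite /=; congr (ops A f); apply: functional_extensionality => i; rewrite (proj2 (Huf i)).
Qed.


Lemma tmap_void (g : void -> void) (t : term void) : tmap F ar g t = t.
Proof. elim: t => [n|[]|f args IH] //=; congr (App f); exact: functional_extensionality. Qed.

Lemma eval_TA_Var (t : term void) : eval (novoid (TA ar void)) (fun n => Var n) t = t.
Proof. by rewrite eval_TA_var tmap_void. Qed.

Variable V : alg -> Prop.
Variable Eqs : eqn -> Prop.
Hypothesis HV : forall A, V A <-> (forall p, Eqs p -> forall v : nat -> A, eqn_holds v p).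

Definition EI (X : Type) : TA ar X -> TA ar X -> Prop := fun p q =>
  exists e sg, Eqs e /\ p = eval (novoid (TA ar X)) sg e.1 /\ q = eval (novoid (TA ar X)) sg e.2.

Section TAq.
Variable X : Type.
Variable G : TA ar X -> TA ar X -> Prop.
Definition TG : TA ar X -> TA ar X -> Prop := fun p q => EI p q \/ G p q.
Definition TQ : alg := qalg (cg TG).
Definition tq (t : term X) : TQ := qpi (cg TG) t.

Lemma TQ_V : V TQ.
Proof.
apply: (V_quot HV (cg_congr TG)) => e w He; apply: cg_base; left; by exists e, w.
Qed.

Lemma tq_hom : hom (tq : TA ar X -> TQ).
Proof. exact: qpi_hom (cg_congr TG). Qed.

Lemma tq_eq p q : tq p = tq q <-> cg TG p q.
Proof. rewrite /tq; exact: (qpi_eq (cg_congr TG)). Qed.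

Lemma tq_G p q : G p q -> tq p = tq q.
Proof. by move=> H; apply/tq_eq; apply: cg_base; right. Qed.

Lemma TQ_eval (t : term void) (sg : nat -> term X) :
  eval (novoid TQ) (fun n => tq (sg n)) t = tq (eval (novoid (TA ar X)) sg t).
Proof. by rewrite (hom_eval_void _ _ tq_hom). Qed.

Lemma TQ_lift (B : alg) (kappa : X -> B) (w : nat -> B) : V B ->
  (forall p q, G p q -> eval kappa w p = eval kappa w q) ->
  exists H : TQ -> B, hom H /\ forall t, H (tq t) = eval kappa w t.
Proof.
move=> HB HG.
have Hk : forall a b, cg TG a b -> eval kappa w a = eval kappa w b.
  apply: cg_sound; first exact: eval_hom.
  move=> a b [[e [sg [He [-> ->]]]]|/HG //].
  rewrite !eval_TA_comp; exact: (V_eqs HV _ HB He).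
exists (@qlift F ar _ (cg TG) _ (fun t : TA ar X => eval kappa w t)); split.
- move=> f args; apply: (qlift_hom (cg_congr TG)) => //.
- move=> t; exact: (qlift_pi (cg_congr TG) Hk).
Qed.

Lemma TQ_surj (x : TQ) : exists t, x = tq t.
Proof. by case: (@qpi_surj F ar _ (cg TG) x) => t ->; exists t. Qed.

End TAq.

Lemma cterm_eval (B : alg) (w : nat -> B) : eval (novoid B) w cterm = ops B c (fun i => False_rect _ (ord_ar0 F ar c hc i)).
Proof. by rewrite /Defs.cterm /=; congr (ops B c); apply: functional_extensionality => i; case: (ord_ar0 F ar c hc i). Qed.

Lemma cterm_noccurs n : ~ toccurs n cterm.
Proof. by case=> i; case: (ord_ar0 F ar c hc i). Qed.

Definition elt0 (B : alg) : B := ops B c (fun i => False_rect _ (ord_ar0 F ar c hc i)).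

Section CohR.
Variable zs : seq nat.
Hypothesis Hzs : uniq zs.
Variable gam : seq eqn.
Hypothesis Hgam : eqns_vars_in (fun n => n \in zs) gam.

Definition GR : TA ar void -> TA ar void -> Prop := fun p q =>
  (exists2 e, List.In e gam & p = e.1 /\ q = e.2) \/ (exists m, m \notin zs /\ p = Var m /\ q = cterm).
Definition R : alg := TQ GR.
Definition iota_R (n : nat) : R := tq GR (Var n).

Lemma R_eval (t : term void) : eval (novoid R) iota_R t = tq GR t.
Proof. by rewrite /iota_R TQ_eval eval_TA_Var. Qed.

Lemma R_V : V R.
Proof. exact: TQ_V. Qed.

Lemma R_gam e : List.In e gam -> eqn_holds iota_R e.
Proof. by move=> He; rewrite /Defs.eqn_holds !R_eval; apply: tq_G; left; exists e. Qed.

Lemma R_univ (B : alg) (w : nat -> B) : V B -> (forall e, List.In e gam -> eqn_holds w e) ->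
  exists H : R -> B, hom H /\ forall n, n \in zs -> H (iota_R n) = w n.
Proof.
move=> HB Hw.
pose w' := fun n => if n \in zs then w n else elt0 B.
have HG : forall p q, GR p q -> eval (novoid B) w' p = eval (novoid B) w' q.
  move=> p q [[e He [-> ->]]|[m [Hm [-> ->]]]].
  - have [H1 H2] := Hgam He.
    rewrite (eval_ext _ (w:=w) (t:=e.1)); last by move=> n /H1 K; rewrite /w' K.
    rewrite (eval_ext _ (w:=w) (t:=e.2)); last by move=> n /H2 K; rewrite /w' K.
    exact: (Hw e He).
  - by rewrite cterm_eval /= /w' (negbTE Hm).
have [H [Hh HH]] := @TQ_lift _ GR B (novoid B) w' HB HG.
exists H; split=> // n Hn; by rewrite /iota_R HH /= /w' Hn.
Qed.

Definition ren (t : term void) : term void := tsub (fun m => Var (index m zs)) t.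

Lemma R_finpres : fin_pres F ar V R.
Proof.
split; first exact: R_V.
exists (size zs), [seq (ren e.1, ren e.2) | e <- gam], (fun i => iota_R (nth 0 zs i)).
split.
  move=> p /List.in_map_iff [e [<- He]]; have [H1 H2] := Hgam He.
  split=> n /toccurs_tsub [m Hm /= <-]; rewrite index_mem; [exact: H1|exact: H2].
split.
  move=> p /List.in_map_iff [e [<- He]]; have [H1 H2] := Hgam He.
  rewrite /Defs.eqn_holds /ren !eval_tsub /=.
  rewrite (eval_ext _ (w:=iota_R) (t:=e.1)); last by move=> n /H1 K; rewrite nth_index.
  rewrite (eval_ext _ (w:=iota_R) (t:=e.2)); last by move=> n /H2 K; rewrite nth_index.
  exact: R_gam.
split.
  move=> x; have [t ->] := TQ_surj x; elim: t => [n|[]|f args IH].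
  - case Hn: (n \in zs).
    + apply: gen_base; exists (index n zs); first by rewrite index_mem.
      by rewrite nth_index.
    + rewrite (tq_G (G:=GR) (p:=Var n) (q:=cterm)); last by right; exists n; rewrite Hn.
      rewrite /Defs.cterm tq_hom; apply: gen_op => i; case: (ord_ar0 F ar c hc i).
  - rewrite (tq_hom GR); exact: gen_op.
move=> B HB w Hw.
have Hw' : forall e, List.In e gam -> eqn_holds (fun n => w (index n zs)) e.
  move=> e He; have := Hw (ren e.1, ren e.2) (List.in_map _ _ _ He).
  by rewrite /Defs.eqn_holds /ren !eval_tsub.
have [H [Hh HH]] := R_univ HB Hw'.
exists H; split=> // i Hi; by rewrite HH ?mem_nth // index_uniq.
Qed.

Variable xs : seq nat.
Hypothesis Hxs : forall n, n \in xs -> n \in zs.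
Hypothesis Hcoh : coherent F ar V.

Lemma theta_exists : exists th : seq eqn,
  eqns_vars_in (fun n => n \in xs) th /\
  (forall (B : alg) (w : nat -> B), V B -> (forall e, List.In e gam -> eqn_holds w e) ->
      forall e, List.In e th -> eqn_holds w e) /\
  (forall E : seq eqn, eqns_vars_in (fun n => n \in xs) E ->
     (forall (B : alg) (w : nat -> B), V B -> (forall e, List.In e gam -> eqn_holds w e) ->
        forall e, List.In e E -> eqn_holds w e) ->
     (forall (B : alg) (w : nat -> B), V B -> (forall e, List.In e th -> eqn_holds w e) ->
        forall e, List.In e E -> eqn_holds w e)).
Proof.
set k := size xs.
set gx := fun i => iota_R (nth 0 xs i).
set Q := subalg F ar (first_n k gx).
have [HQV [m [E' [g' [HE'v [HE'h [Hgen Huniv]]]]]]] := Hcoh R_finpres k gx.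
rewrite -/Q in g' HE'h Hgen Huniv *.
have Hval : hom (fun z : Q => proj1_sig z) by apply: val_hom.
have [sg Hsg] : exists sg : nat -> term void, forall j,
    tvars_in (fun n => n \in xs) (sg j) /\ eval (novoid R) iota_R (sg j) = proj1_sig (g' j).
  apply: (@choice_fun _ _ (fun j u => tvars_in (fun n => n \in xs) u /\ eval (novoid R) iota_R u = proj1_sig (g' j))) => j.
  have [u Hu Hev] := gen_term (proj2_sig (g' j)).
  exists (tsub (fun i => Var (nth 0 xs i)) u); split.
  - by move=> n /toccurs_tsub [i /Hu Hi /= <-]; rewrite mem_nth.
  - by rewrite eval_tsub -Hev.
have [rho Hrho] : exists rho : nat -> term void, forall i, i < k ->
    tvars_in (fun n => n < m) (rho i) /\ proj1_sig (eval (novoid Q) g' (rho i)) = gx i.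
  apply: (@choice_fun _ _ (fun i r => i < k -> tvars_in (fun n => n < m) r /\ proj1_sig (eval (novoid Q) g' r) = gx i)) => i.
  case: (ltnP i k) => Hi; last by exists (Var 0).
  have Hg : gen (first_n k gx) (gx i) by apply: gen_base; exists i.
  have [r Hr Hev] := gen_term (Hgen (exist _ (gx i) Hg)).
  by exists r => _; split=> //; rewrite Hev.
pose th1 : seq eqn := [seq (tsub sg e.1, tsub sg e.2) | e <- E'].
pose th2 : seq eqn := [seq (Var (nth 0 xs i), tsub sg (rho i)) | i <- iota 0 k].
exists (th1 ++ th2).
have Hvsub : forall t, tvars_in (fun n => n \in xs) (tsub sg t).
  by move=> t n /toccurs_tsub [j _ /(proj1 (Hsg j))].
have Hin : forall e, List.In e (th1 ++ th2) ->
   (exists2 e', List.In e' E' & e = (tsub sg e'.1, tsub sg e'.2)) \/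
   (exists2 i, i < k & e = (Var (nth 0 xs i), tsub sg (rho i))).
  move=> e Hee; case: (List.in_app_or _ _ _ Hee) => [/List.in_map_iff [e' [<- He']]|/List.in_map_iff [i [<- Hi]]].
  - by left; exists e'.
  - by right; exists i => //; move/In_mem: Hi; rewrite mem_iota.
have HthR : forall e, List.In e (th1 ++ th2) -> eqn_holds iota_R e.
  move=> e /Hin [[e' He' ->]|[i Hi ->]]; rewrite /Defs.eqn_holds /= !eval_tsub.
  - have E1 : forall t, eval (novoid R) (fun n => eval (novoid R) iota_R (sg n)) t =
                        proj1_sig (eval (novoid Q) g' t).
      move=> t; rewrite (hom_eval_void _ _ Hval); apply: eval_ext => n _; exact: (proj2 (Hsg n)).
    by rewrite !E1 (HE'h _ He').
  - have E1 : forall t, eval (novoid R) (fun n => eval (novoid R) iota_R (sg n)) t =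
                        proj1_sig (eval (novoid Q) g' t).
      move=> t; rewrite (hom_eval_void _ _ Hval); apply: eval_ext => n _; exact: (proj2 (Hsg n)).
    by rewrite E1 (proj2 (Hrho i Hi)).
split.
  move=> e /Hin [[e' He' ->]|[i Hi ->]]; split=> //=.
  - by move=> n /= <-; rewrite mem_nth.
split.
  move=> B w HB Hw e He.
  have [H [Hh HH]] := R_univ HB Hw.
  have [Ev1 Ev2] : tvars_in (fun n => n \in xs) e.1 /\ tvars_in (fun n => n \in xs) e.2.
    case/Hin: He => [[e' He' ->]|[i Hi ->]]; split=> //=.
    by move=> n /= <-; rewrite mem_nth.
  rewrite /Defs.eqn_holds (eval_ext _ (w:=fun n => H (iota_R n)) (t:=e.1)); last first.
    by move=> n /Ev1 K; rewrite HH // Hxs.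
  rewrite (eval_ext _ (w:=fun n => H (iota_R n)) (t:=e.2)); last first.
    by move=> n /Ev2 K; rewrite HH // Hxs.
  by rewrite -!(hom_eval_void _ _ Hh) (HthR e He).
move=> E HEv HE B w HB Hw e He.
pose w'' := fun j => eval (novoid B) w (sg j).
have HE'w : forall e, List.In e E' -> eqn_holds w'' e.
  move=> e0 He0; have := Hw (tsub sg e0.1, tsub sg e0.2).
  rewrite /Defs.eqn_holds !eval_tsub; apply; apply: List.in_or_app; left.
  exact: (List.in_map (fun e => (tsub sg e.1, tsub sg e.2)) _ _ He0).
have [h [Hh Hhg]] := Huniv B HB w'' HE'w.
have Hx : forall i (z : Q), i < k -> proj1_sig z = gx i -> h z = w (nth 0 xs i).
  move=> i z Hi Hz.
  have -> : z = eval (novoid Q) g' (rho i) by apply: sval_inj; rewrite Hz (proj2 (Hrho i Hi)).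
  rewrite (hom_eval_void _ _ Hh).
  rewrite (eval_ext _ (w:=w'') (t:=rho i)); last by move=> n /(proj1 (Hrho i Hi)) K; rewrite Hhg.
  have := Hw (Var (nth 0 xs i), tsub sg (rho i)).
  rewrite /Defs.eqn_holds eval_tsub /= => ->; first done.
  apply: List.in_or_app; right.
  apply: (List.in_map (fun i => (Var (nth 0 xs i), tsub sg (rho i)))); apply/In_mem; by rewrite mem_iota.
have [xh Hxh] : exists xh : nat -> Q, forall n, n \in xs -> proj1_sig (xh n) = iota_R n.
  apply: (@choice_fun _ _ (fun n (z : Q) => n \in xs -> proj1_sig z = iota_R n)) => n.
  case Hn: (n \in xs); last by exists (elt0 Q).
  have Hg : gen (first_n k gx) (iota_R n).
    apply: gen_base; exists (index n xs); first by rewrite index_mem.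
    by rewrite /gx nth_index.
  by exists (exist _ _ Hg).
have HER : eqn_holds iota_R e.
  apply: (HE R iota_R R_V _ e He); exact: R_gam.
have [Ev1 Ev2] := HEv e He.
have HEQ : eval (novoid Q) xh e.1 = eval (novoid Q) xh e.2.
  apply: sval_inj; rewrite !(hom_eval_void _ _ Hval).
  rewrite (eval_ext _ (w:=iota_R) (t:=e.1)); last by move=> n /Ev1 /Hxh.
  by rewrite (eval_ext _ (w:=iota_R) (t:=e.2)) //; move=> n /Ev2 /Hxh.
have Hhx : forall n, n \in xs -> h (xh n) = w n.
  move=> n Hn; rewrite -{2}(nth_index 0 Hn); apply: Hx; first by rewrite index_mem.
  by rewrite Hxh // /gx nth_index.
rewrite /Defs.eqn_holds (eval_ext _ (w:=fun n => h (xh n)) (t:=e.1)); last first.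
  by move=> n /Ev1 /Hhx.
rewrite (eval_ext _ (w:=fun n => h (xh n)) (t:=e.2)); last by move=> n /Ev2 /Hhx.
by rewrite -!(hom_eval_void _ _ Hh) HEQ.
Qed.

End CohR.

End Coh.


Section Vars.
Variable F : Type.
Variable ar : F -> nat.
Local Notation term := (Defs.term F ar).
Local Notation eqn := (Defs.eqn F ar).
Local Notation toccurs := (Defs.toccurs F ar).

Fixpoint tvars C (t : term C) : seq nat :=
  match t with
  | Defs.Var n => [:: n]
  | Defs.Cst _ => [::]
  | Defs.App f args => flatten [seq tvars (args i) | i <- enum 'I_(ar f)]
  end.

Lemma tvarsP C (t : term C) n : toccurs n t <-> n \in tvars t.
Proof.
elim: t => [m|x|f args IH] /=.
- by rewrite inE; split=> [->|/eqP ->].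
- by [].
- split.
  + case=> i /IH Hi; apply/flattenP; exists (tvars (args i)) => //.
    by apply/mapP; exists i => //; rewrite mem_enum.
  + by case/flattenP=> s /mapP [i _ ->] /IH Hi; exists i.
Qed.

Definition evars (E : seq eqn) : seq nat := flatten [seq tvars e.1 ++ tvars e.2 | e <- E].

Lemma evarsP (E : seq eqn) e n : List.In e E -> toccurs n e.1 \/ toccurs n e.2 -> n \in evars E.
Proof.
move=> He Hn; elim: E He => //= e' E IH [Ee|He]; rewrite /evars /= mem_cat.
- by subst e'; rewrite mem_cat; case: Hn => /tvarsP ->; rewrite ?orbT.
- by rewrite IH ?orbT.
Qed.
End Vars.

Section Core.
Variable F : Type.
Variable ar : F -> nat.

Local Notation alg := (Defs.algebra F ar).
Local Notation term := (Defs.term F ar).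
Local Notation form := (Defs.form F ar).
Local Notation eqn := (Defs.eqn F ar).
Local Notation Var := (@Defs.Var F ar _).
Local Notation Cst := (@Defs.Cst F ar _).
Local Notation App := (@Defs.App F ar _).
Local Notation eval := (Defs.eval F ar _ _).
Local Notation sat := (Defs.sat F ar _ _).
Local Notation ops := (Defs.ops F ar).
Local Notation upd := (Defs.upd F ar _).
Local Notation hom := (Defs.hom F ar).
Local Notation embedding := (Defs.embedding F ar).
Local Notation eqn_holds := (Defs.eqn_holds F ar).
Local Notation toccurs := (Defs.toccurs F ar).
Local Notation tvars_in := (Defs.tvars_in F ar).
Local Notation eqns_vars_in := (Defs.eqns_vars_in F ar).
Local Notation conj_eqs := (Defs.conj_eqs F ar).
Local Notation gen := (Defs.gen F ar).
Local Notation first_n := (Defs.first_n).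
Local Notation qfree := (Defs.qfree F ar).
Local Notation Vmodels := (Defs.Vmodels F ar).
Local Notation FEq := (@Defs.FEq F ar _).
Local Notation FNot := (@Defs.FNot F ar _).
Local Notation FAnd := (@Defs.FAnd F ar _).
Local Notation FOr := (@Defs.FOr F ar _).
Local Notation FImp := (@Defs.FImp F ar _).
Local Notation FAll := (@Defs.FAll F ar _).
Local Notation FEx := (@Defs.FEx F ar _).

Variable c : F.
Hypothesis hc : ar c = 0.
Local Notation cterm := (Defs.cterm F ar c hc).
Local Notation fbot := (Defs.fbot F ar c hc).

Variable V : alg -> Prop.
Variable Eqs : eqn -> Prop.
Hypothesis HV : forall A, V A <-> (forall p, Eqs p -> forall v : nat -> A, eqn_holds v p).
Variable alpha : seq eqn.
Hypothesis Halpha_vars : eqns_vars_in (fun n => n < 4) alpha.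
Hypothesis Halpha : forall A, V A -> forall a1 a2 b1 b2 : A,
      in_Cg F ar b1 b2 a1 a2 <->
      sat (novoid A) (fun n => nth a1 [:: a1; a2; b1; b2] n) (conj_eqs alpha).
Hypothesis Hcoh : coherent F ar V.
Hypothesis HAP : AP F ar V.
Hypothesis HEVRP : EVRP F ar c hc V.

Local Notation TQ := (TQ Eqs).
Local Notation tq := (tq Eqs).
Local Notation EPS := (EPS alpha).

Definition holds_all (B : alg) (w : nat -> B) (E : seq eqn) := forall e, List.In e E -> eqn_holds w e.

Definition prim_sat (B : alg) (w : nat -> B) (gam dl : seq eqn) :=
  holds_all w gam /\ forall e, List.In e dl -> ~ eqn_holds w e.

Lemma holds_all_ext (B : alg) (w w' : nat -> B) (X : nat -> Prop) E :
  eqns_vars_in X E -> (forall n, X n -> w n = w' n) -> holds_all w E <-> holds_all w' E.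
Proof.
move=> HE Hw.
have E1 : forall t, tvars_in X t -> eval (novoid B) w t = eval (novoid B) w' t.
  by move=> t Ht; apply: eval_ext => n /Ht /Hw.
split=> H e He; have [H1 H2] := HE e He; have := H e He;
 by rewrite /Defs.eqn_holds !E1.
Qed.

Lemma fbot_false (B : alg) (w : nat -> B) : ~ sat (novoid B) w fbot.
Proof. by apply. Qed.

Lemma quot_trick (B : alg) (u : nat -> B) (L M : seq eqn) (s t : term void) :
  V B ->
  (forall (D : alg) (u' : nat -> D), V D -> holds_all u' L -> holds_all u' M ->
        eval (novoid D) u' s = eval (novoid D) u' t) ->
  holds_all u L -> cg (GL u M) (eval (novoid B) u s) (eval (novoid B) u t).
Proof.
move=> HB H HL.
have Hc := cg_congr (GL u M).
have HQ : V (qalg (cg (GL u M))) by apply: (V_quotV HV Hc).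
have Hp := qpi_hom Hc.
have X : forall z, eval (novoid (qalg (cg (GL u M)))) (fun n => qpi (cg (GL u M)) (u n)) z =
                   qpi (cg (GL u M)) (eval (novoid B) u z).
  by move=> z; rewrite (hom_eval_void _ _ Hp).
apply/(qpi_eq Hc); rewrite -!X; apply: (H (qalg (cg (GL u M))) (fun n => qpi (cg (GL u M)) (u n))) => // e He; rewrite /Defs.eqn_holds !X.
- by rewrite (HL e He).
- by apply/(qpi_eq Hc); apply: cg_base; exists e.
Qed.

Lemma conj_eqs_qfree (E : seq eqn) : qfree (conj_eqs E).
Proof. by elim: E => //= e E ->. Qed.

Lemma vars_in_mono (X Y : nat -> Prop) (E : seq eqn) :
  eqns_vars_in X E -> (forall n, X n -> Y n) -> eqns_vars_in Y E.
Proof. by move=> H HXY e /H [H1 H2]; split=> n Hn; apply: HXY; [apply: H1|apply: H2]. Qed.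

Lemma core (gam dl : seq eqn) (y : nat) : exists psi : form void,
  qfree psi /\
  (forall (B : alg) (w : nat -> B) a, sat (novoid B) (upd w y a) psi <-> sat (novoid B) w psi) /\
  (forall (B : alg) (w : nat -> B), V B -> prim_sat w gam dl -> sat (novoid B) w psi) /\
  (forall (A : alg) (w : nat -> A), V A -> sat (novoid A) w psi ->
     exists (D : alg) (h : A -> D) (d : D), V D /\ embedding h /\
       prim_sat (upd (fun n => h (w n)) y d) gam dl).
Proof.
set xs := undup [seq n <- evars (gam ++ dl) | n != y].
set zs := y :: xs.
have Hyxs : y \notin xs by rewrite mem_undup mem_filter eqxx.
have Hzs : uniq zs by rewrite /zs /= Hyxs undup_uniq.
have Hxz : forall n, n \in xs -> n \in zs by move=> n Hn; rewrite inE Hn orbT.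
have Hvz : forall E, (forall e, List.In e E -> List.In e (gam ++ dl)) -> eqns_vars_in (fun n => n \in zs) E.
  move=> E HE e He; have He' := HE e He.
  have K : forall n, toccurs n e.1 \/ toccurs n e.2 -> n \in zs.
    move=> n Hn; rewrite inE; case: (eqVneq n y) => //= Hny.
    by rewrite mem_undup mem_filter Hny (evarsP He' Hn).
  by split=> n Hn; apply: K; [left|right].
have Hgz : eqns_vars_in (fun n => n \in zs) gam by apply: Hvz => e He; apply: List.in_or_app; left.
have Hdz : eqns_vars_in (fun n => n \in zs) dl by apply: Hvz => e He; apply: List.in_or_app; right.
have [th [Hthv [Hth1 Hth2]]] := theta_exists hc HV Hzs Hgz Hxz Hcoh.
have Hy : ~ List.In y xs by move/In_mem; rewrite (negbTE Hyxs).
have indepE : forall E, eqns_vars_in (fun m => List.In m xs) E ->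
    forall (B : alg) (w : nat -> B) a, sat (novoid B) (upd w y a) (conj_eqs E) <-> sat (novoid B) w (conj_eqs E).
  move=> E HE B w a; rewrite !conj_eqs_sat; apply: (holds_all_ext HE) => n Hn.
  by apply: upd_other => Eny; apply: Hy; rewrite -Eny.
have [piof Hpi] : exists piof : eqn -> form void, forall d,
   qfree (piof d) /\
   (forall (B : alg) (w : nat -> B) a, sat (novoid B) (upd w y a) (piof d) <-> sat (novoid B) w (piof d)) /\
   (List.In d dl ->
   Vmodels V (FImp (piof d) (conj_eqs (EPS d.1 d.2 gam))) /\
   forall phi : seq eqn, eqns_vars_in (fun m => List.In m xs) phi ->
     Vmodels V (FImp (conj_eqs phi) (conj_eqs (EPS d.1 d.2 gam))) ->
     Vmodels V (FImp (conj_eqs phi) (piof d))).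
  apply: (@choice_fun _ _ (fun d p => qfree p /\
   (forall (B : alg) (w : nat -> B) a, sat (novoid B) (upd w y a) p <-> sat (novoid B) w p) /\
   (List.In d dl ->
   Vmodels V (FImp p (conj_eqs (EPS d.1 d.2 gam))) /\
   forall phi : seq eqn, eqns_vars_in (fun m => List.In m xs) phi ->
     Vmodels V (FImp (conj_eqs phi) (conj_eqs (EPS d.1 d.2 gam))) ->
     Vmodels V (FImp (conj_eqs phi) p)))) => d.
  case: (classic (List.In d dl)) => Hd.
  2: exists fbot; split=> //; split; last by move/Hd.
  2: by move=> B w a; split=> H; exfalso; apply: H.
  have Hv : eqns_vars_in (fun m => List.In m (y :: xs)) (EPS d.1 d.2 gam).
    have [H1 H2] := Hdz d Hd.
    apply: (vars_in_mono (X := fun n => n \in zs)); last by move=> n /In_mem.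
    exact: (EPS_vars Halpha_vars Hgz H1 H2).
  have [p [H0 [H1 H2]]] := HEVRP Hy Hv.
  exists p; split; last split.
  - by case: H0 => [->|[E [_ ->]]] //; apply: conj_eqs_qfree.
  - case: H0 => [->|[E [HE ->]]]; first by move=> B w a; split=> H; exfalso; apply: H.
    by move=> B w a; apply: indepE.
  - by move=> _; split.
set negs := foldr (fun d acc => FAnd (FNot (piof d)) acc) (conj_eqs [::]) dl.
have Hnegs : forall (B : alg) (w : nat -> B), sat (novoid B) w negs <-> forall d, List.In d dl -> ~ sat (novoid B) w (piof d).
  move=> B w; rewrite /negs; elim: (dl) => [|d l IH] /=; first by split.
  rewrite IH; split; first by move=> [H1 H2] d' [<-|/H2].
  by move=> H; split=> [|d' Hd']; apply: H; [left|right].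
exists (FAnd (conj_eqs th) negs).
have Hpsi : forall (B : alg) (w : nat -> B), sat (novoid B) w (FAnd (conj_eqs th) negs) <->
   holds_all w th /\ forall d, List.In d dl -> ~ sat (novoid B) w (piof d).
  by move=> B w; rewrite /= conj_eqs_sat Hnegs.
split.
  split; first exact: conj_eqs_qfree.
  rewrite /negs; elim: (dl) => [|d l IH] //=; split=> //; exact: (proj1 (Hpi d)).
split.
  move=> B w a; rewrite /= (Hnegs B w) (Hnegs B (upd w y a)).
  have -> : sat (novoid B) (upd w y a) (conj_eqs th) <-> sat (novoid B) w (conj_eqs th).
    apply: indepE; apply: (vars_in_mono Hthv) => n /In_mem //.
  split=> -[H1 H2]; split=> // d Hd; [rewrite -(proj1 (proj2 (Hpi d)) B w a)|rewrite (proj1 (proj2 (Hpi d)) B w a)]; exact: H2.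
split.
  move=> B w HB [Hg Hd]; apply/Hpsi; split; first exact: Hth1.
  move=> d Hdd Hp; apply: (Hd d Hdd).
  have [H1 _] := proj2 (proj2 (Hpi d)) Hdd.
  have := H1 B HB w Hp; move/conj_eqs_sat.
  move/(EPS_sem HV Halpha_vars Halpha w gam HB d.1 d.2).
  by apply: cg_eq => x z [e He [-> ->]]; apply: Hg.
move=> A w HA /Hpsi [Hthw Hnpi].
set k := size xs.
set gx := fun i => w (nth 0 xs i).
set S := subalg F ar (first_n k gx).
pose Da : term void -> term void -> Prop := fun s t => tvars_in (fun n => n \in xs) s /\
   tvars_in (fun n => n \in xs) t /\ eval (novoid A) w s = eval (novoid A) w t.
pose GS : TA ar void -> TA ar void -> Prop := fun p q => (exists2 e, List.In e gam & p = e.1 /\ q = e.2) \/ Da p q.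
have KL : forall s t, cg (TG Eqs GS) s t -> exists L : seq eqn, (forall e, List.In e L -> Da e.1 e.2) /\
   forall (B : alg) (u : nat -> B), V B -> holds_all u gam -> holds_all u L ->
     eval (novoid B) u s = eval (novoid B) u t.
  move=> s t H.
  have H' : cg (fun p q => (EI Eqs p q \/ exists2 e, List.In e gam & p = e.1 /\ q = e.2) \/ Da p q) s t.
    by apply: (cg_mono _ H) => p q [K|[K|K]]; [left; left|left; right|right].
  have [L [HL HcL]] := cg_fin H'.
  exists L; split=> // B u HB Hg HLu.
  apply: (cg_sound (eval_hom (novoid B) u) _ HcL).
  move=> p q [[[e [sg [He [-> ->]]]]|[e He [-> ->]]]|HpL].
  + rewrite !eval_TA_comp; exact: (V_eqs HV _ HB He).
  + exact: Hg.
  + exact: (HLu (p, q) HpL).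
have Hi : forall s t, tvars_in (fun n => n \in xs) s -> tvars_in (fun n => n \in xs) t ->
    cg (TG Eqs GS) s t -> eval (novoid A) w s = eval (novoid A) w t.
  move=> s t Hs Ht /KL [L [HL HLs]].
  have HLv : eqns_vars_in (fun n => n \in xs) L by move=> e /HL [H1 [H2 _]].
  have Hgv := EPS_vars Halpha_vars HLv Hs Ht.
  have HE : forall (B : alg) (u : nat -> B), V B -> holds_all u gam -> holds_all u (EPS s t L).
    move=> B u HB Hg; apply/(EPS_sem HV Halpha_vars Halpha u L HB s t).
    apply: (quot_trick (L:=gam) (M:=L)) => // D u' HD H1 H2; exact: HLs.
  have := Hth2 _ Hgv HE A w HA Hthw.
  move/(EPS_sem HV Halpha_vars Halpha w L HA s t).
  by apply: cg_eq => x z [e He [-> ->]]; exact: (proj2 (proj2 (HL e He))).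
have Hii : forall d, List.In d dl -> ~ cg (TG Eqs GS) d.1 d.2.
  move=> d Hd /KL [L [HL HLs]].
  have HLv' : eqns_vars_in (fun m => List.In m xs) L.
    by move=> e /HL [H1 [H2 _]]; split=> n Hn; apply/In_mem; [apply: H1|apply: H2].
  have [_ Hok3] := proj2 (proj2 (Hpi d)) Hd.
  have Hchi : Vmodels V (FImp (conj_eqs L) (conj_eqs (EPS d.1 d.2 gam))).
    move=> B HB u /= /conj_eqs_sat HLu; apply/conj_eqs_sat.
    apply/(EPS_sem HV Halpha_vars Halpha u gam HB d.1 d.2).
    apply: (quot_trick (L:=L) (M:=gam)) => // D u' HD H1 H2; exact: HLs.
  have K := Hok3 L HLv' Hchi A HA w.
  apply: (Hnpi d Hd); apply: K; apply/conj_eqs_sat => e He; exact: (proj2 (proj2 (HL e He))).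
have [rep Hrep] : exists rep : S -> term void, forall z,
    tvars_in (fun n => n \in xs) (rep z) /\ eval (novoid A) w (rep z) = proj1_sig z.
  apply: (@choice_fun _ _ (fun (z : S) r => tvars_in (fun n => n \in xs) r /\ eval (novoid A) w r = proj1_sig z)) => z.
  have [u Hu Hev] := gen_term (proj2_sig z).
  exists (tsub (fun i => Var (nth 0 xs i)) u); split.
  - by move=> n /toccurs_tsub [i /Hu Hii0 /= <-]; rewrite mem_nth.
  - by rewrite eval_tsub -Hev.
pose j := fun z : S => tq GS (rep z).
have Hjspec : forall z r, tvars_in (fun n => n \in xs) r -> eval (novoid A) w r = proj1_sig z -> j z = tq GS r.
  move=> z r Hr Hev; apply: (tq_G Eqs); right; split; first exact: (proj1 (Hrep z)).
  by split=> //; rewrite (proj2 (Hrep z)) Hev.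
have Hjh : hom j.
  move=> f zz; rewrite (Hjspec _ (App f (fun i => rep (zz i)))).
  - by rewrite (tq_hom Eqs GS).
  - by move=> n [i /(proj1 (Hrep (zz i)))].
  - by rewrite /=; congr (ops A f); apply: functional_extensionality => i; rewrite (proj2 (Hrep (zz i))).
have Hji : injective j.
  move=> z1 z2 /(tq_eq Eqs GS) H; apply: sval_inj.
  rewrite -(proj2 (Hrep z1)) -(proj2 (Hrep z2)); apply: Hi => //; [exact: (proj1 (Hrep z1))|exact: (proj1 (Hrep z2))].
have HS : V S by apply: (V_subalg HV).
have HPS : V (TQ GS) by apply: (TQ_V HV).
have Hinc : embedding (fun z : S => proj1_sig z) by split; [apply: val_hom|apply: sval_inj].
have [D [h [kk [HD [Hh [Hkk Hcomm]]]]]] := HAP HS HA HPS Hinc (conj Hjh Hji).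
exists D, h, (kk (tq GS (Var y))); split=> //; split=> //.
set u' := upd (fun n => h (w n)) y (kk (tq GS (Var y))).
have Hu' : forall n, n \in zs -> u' n = kk (tq GS (Var n)).
  move=> n; rewrite inE; case: (eqVneq n y) => [->|Hny] /= Hn; first by rewrite /u' upd_same.
  rewrite /u' upd_other; last by move=> E; rewrite E eqxx in Hny.
  have Hg : gen (first_n k gx) (w n).
    apply: gen_base; exists (index n xs); first by rewrite index_mem.
    by rewrite /gx nth_index.
  have := Hcomm (exist _ (w n) Hg); rewrite /= => ->.
  by rewrite (Hjspec _ (Var n)) //= => m <-.
have Hev : forall t, tvars_in (fun n => n \in zs) t -> eval (novoid D) u' t = kk (tq GS t).
  move=> t Ht; rewrite (eval_ext _ (w := fun n => kk (tq GS (Var n))) (t:=t)); last by move=> n /Ht /Hu'.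
  by rewrite -(hom_eval_void _ _ (proj1 Hkk)) (TQ_eval Eqs GS t (fun n => Var n)) eval_TA_Var.
split.
- move=> e He; have [H1 H2] := Hgz e He; rewrite /Defs.eqn_holds !Hev //; congr kk.
  by apply: (tq_G Eqs); left; exists e.
- move=> d Hd; have [H1 H2] := Hdz d Hd; rewrite /Defs.eqn_holds !Hev //.
  by move=> /(proj2 Hkk) /(tq_eq Eqs GS); apply: Hii.
Qed.

End Core.


Section QE.
Variable F : Type.
Variable ar : F -> nat.

Local Notation alg := (Defs.algebra F ar).
Local Notation term := (Defs.term F ar).
Local Notation form := (Defs.form F ar).
Local Notation eqn := (Defs.eqn F ar).
Local Notation Var := (@Defs.Var F ar _).
Local Notation eval := (Defs.eval F ar _ _).
Local Notation sat := (Defs.sat F ar _ _).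
Local Notation ops := (Defs.ops F ar).
Local Notation upd := (Defs.upd F ar _).
Local Notation hom := (Defs.hom F ar).
Local Notation embedding := (Defs.embedding F ar).
Local Notation eqn_holds := (Defs.eqn_holds F ar).
Local Notation qfree := (Defs.qfree F ar).
Local Notation FEq := (@Defs.FEq F ar _).
Local Notation FNot := (@Defs.FNot F ar _).
Local Notation FAnd := (@Defs.FAnd F ar _).
Local Notation FOr := (@Defs.FOr F ar _).
Local Notation FImp := (@Defs.FImp F ar _).
Local Notation FAll := (@Defs.FAll F ar _).
Local Notation FEx := (@Defs.FEx F ar _).

Variable c : F.
Hypothesis hc : ar c = 0.
Local Notation fbot := (Defs.fbot F ar c hc).

Variable V : alg -> Prop.

Definition ecl (B : alg) : Prop :=
  forall (gam dl : seq eqn) (y : nat) (w : nat -> B),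
    (exists (D : alg) (h : B -> D) (d : D), V D /\ embedding h /\
       prim_sat (upd (fun n => h (w n)) y d) gam dl) ->
    exists b, prim_sat (upd w y b) gam dl.

Definition KK (B : alg) : Prop := V B /\ ecl B.

Definition dsat (B : alg) (w : nat -> B) (ds : seq (seq eqn * seq eqn)) : Prop :=
  exists2 gd, List.In gd ds & prim_sat w gd.1 gd.2.

Definition dprod (ds es : seq (seq eqn * seq eqn)) : seq (seq eqn * seq eqn) :=
  List.flat_map (fun a => List.map (fun b => (a.1 ++ b.1, a.2 ++ b.2)) es) ds.

Lemma dsat_app (B : alg) (w : nat -> B) ds es : dsat w (ds ++ es) <-> dsat w ds \/ dsat w es.
Proof.
split.
- by case=> gd /List.in_app_iff [H|H] K; [left|right]; exists gd.
- by case=> -[gd H K]; exists gd => //; apply: List.in_or_app; [left|right].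
Qed.

Lemma prim_sat_cat (B : alg) (w : nat -> B) a1 a2 b1 b2 :
  prim_sat w (a1 ++ b1) (a2 ++ b2) <-> prim_sat w a1 a2 /\ prim_sat w b1 b2.
Proof.
rewrite /prim_sat /holds_all; split.
- case=> H1 H2; split; split=> e He; [apply: H1|apply: H2|apply: H1|apply: H2];
  apply: List.in_or_app; by [left|left|right|right].
- case=> -[H1 H2] [K1 K2]; split=> e /List.in_app_iff [He|He];
  by [apply: H1|apply: K1|apply: H2|apply: K2].
Qed.

Lemma dsat_prod (B : alg) (w : nat -> B) ds es : dsat w (dprod ds es) <-> dsat w ds /\ dsat w es.
Proof.
split.
- case=> gd /List.in_flat_map [a [Ha /List.in_map_iff [b [<- Hb]]]] /prim_sat_cat [K1 K2].
  by split; [exists a|exists b].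
- case=> -[a Ha K1] [b Hb K2]; exists (a.1 ++ b.1, a.2 ++ b.2); last by apply/prim_sat_cat.
  apply/List.in_flat_map; exists a; split=> //; apply/List.in_map_iff; by exists b.
Qed.

Lemma dnf (q : form void) : qfree q -> exists dp dn,
  (forall (B : alg) (w : nat -> B), sat (novoid B) w q <-> dsat w dp) /\
  (forall (B : alg) (w : nat -> B), ~ sat (novoid B) w q <-> dsat w dn).
Proof.
elim: q => [t1 t2|q IH|q IHq r IHr|q IHq r IHr|q IHq r IHr|n q IH|n q IH] //=.
- move=> _; exists [:: ([:: (t1, t2)], [::])], [:: ([::], [:: (t1, t2)])]; split=> B w.
  + split; first by move=> H; exists ([:: (t1, t2)], [::]); [left|split=> // e [<-|]].
    by case=> gd [<-|//] [H _]; apply: (H (t1, t2)); left.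
  + split; first by move=> H; exists ([::], [:: (t1, t2)]); [left|split=> // e [<-|]].
    by case=> gd [<-|//] [_ H]; apply: (H (t1, t2)); left.
- move=> /IH [dp [dn [H1 H2]]]; exists dn, dp; split=> B w; first by rewrite H2.
  by rewrite -H1; split; [apply: NNPP|move=> K K'].
- move=> [/IHq [dpq [dnq [Hq1 Hq2]]] /IHr [dpr [dnr [Hr1 Hr2]]]].
  exists (dprod dpq dpr), (dnq ++ dnr); split=> B w.
  + by rewrite dsat_prod -Hq1 -Hr1.
  + rewrite dsat_app -Hq2 -Hr2; split; last by case=> K [].
    by move=> K; apply: NNPP => K'; apply: K; split; apply: NNPP => K''; apply: K'; [left|right].
- move=> [/IHq [dpq [dnq [Hq1 Hq2]]] /IHr [dpr [dnr [Hr1 Hr2]]]].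
  exists (dpq ++ dpr), (dprod dnq dnr); split=> B w.
  + by rewrite dsat_app -Hq1 -Hr1.
  + rewrite dsat_prod -Hq2 -Hr2; split; first by move=> K; split=> K'; apply: K; [left|right].
    by case=> K1 K2 [].
- move=> [/IHq [dpq [dnq [Hq1 Hq2]]] /IHr [dpr [dnr [Hr1 Hr2]]]].
  exists (dnq ++ dpr), (dprod dpq dnr); split=> B w.
  + rewrite dsat_app -Hq2 -Hr1; split; last by case=> K // K'.
    by move=> K; case: (classic (sat (novoid B) w q)) => K'; [right; apply: K|left].
  + rewrite dsat_prod -Hq1 -Hr2; split; last by case=> K1 K2 K; apply: K2; apply: K.
    move=> K; split; first by apply: NNPP => K'; apply: K => /K'.
    by move=> K'; apply: K => _.
Qed.

Variable Eqs : eqn -> Prop.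
Hypothesis HV : forall A, V A <-> (forall p, Eqs p -> forall v : nat -> A, eqn_holds v p).
Variable alpha : seq eqn.
Hypothesis Halpha_vars : Defs.eqns_vars_in F ar (fun n => n < 4) alpha.
Hypothesis Halpha : forall A, V A -> forall a1 a2 b1 b2 : A,
      in_Cg F ar b1 b2 a1 a2 <->
      sat (novoid A) (fun n => nth a1 [:: a1; a2; b1; b2] n) (Defs.conj_eqs F ar alpha).
Hypothesis Hcoh : coherent F ar V.
Hypothesis HAP : AP F ar V.
Hypothesis HEVRP : EVRP F ar c hc V.

Lemma ex_elim (ds : seq (seq eqn * seq eqn)) (y : nat) : exists q : form void, qfree q /\
  forall (B : alg) (w : nat -> B), KK B -> ((exists a, dsat (upd w y a) ds) <-> sat (novoid B) w q).
Proof.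
elim: ds => [|gd ds [q [Hq IH]]].
- exists fbot; split=> // B w _; split; first by case=> a [].
  by move=> H; exfalso; apply: H.
- have [psi [Hpq [Hind [Ha Hb]]]] := core HV Halpha_vars Halpha Hcoh HAP HEVRP gd.1 gd.2 y.
  exists (FOr psi q); split=> // B w [HB Hec] /=; rewrite -IH //.
  split.
  + case=> a [gd' [<-|Hgd'] K]; last by right; exists a, gd'.
    by left; rewrite -(Hind B w a); apply: Ha.
  + case=> [K|[a [gd' Hgd' K]]]; last by exists a, gd' => //; right.
    have [D [h [d [HD [Hh Hp]]]]] := Hb B w HB K.
    have [b Hbb] := Hec gd.1 gd.2 y w (ex_intro _ D (ex_intro _ h (ex_intro _ d (conj HD (conj Hh Hp))))).
    by exists b, gd => //; left.
Qed.

Lemma ex_qf (q : form void) (y : nat) : qfree q -> exists q' : form void, qfree q' /\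
  forall (B : alg) (w : nat -> B), KK B -> ((exists a, sat (novoid B) (upd w y a) q) <-> sat (novoid B) w q').
Proof.
move=> /dnf [dp [dn [H1 H2]]].
have [q' [Hq' H]] := ex_elim dp y.
exists q'; split=> // B w HB; rewrite -H //.
by split=> -[a K]; exists a; move: K; rewrite H1.
Qed.

Theorem QE (p : form void) : exists q : form void, qfree q /\
  forall (B : alg) (w : nat -> B), KK B -> (sat (novoid B) w p <-> sat (novoid B) w q).
Proof.
elim: p => [t1 t2|p [q [Hq IH]]|p [q [Hq IHq]] r [s [Hs IHr]]|p [q [Hq IHq]] r [s [Hs IHr]]|p [q [Hq IHq]] r [s [Hs IHr]]|n p [q [Hq IH]]|n p [q [Hq IH]]].
- by exists (FEq t1 t2).
- by exists (FNot q); split=> // B w HB /=; rewrite IH.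
- by exists (FAnd q s); split=> // B w HB /=; rewrite IHq ?IHr.
- by exists (FOr q s); split=> // B w HB /=; rewrite IHq ?IHr.
- by exists (FImp q s); split=> // B w HB /=; rewrite IHq ?IHr.
- have [q' [Hq' H]] := ex_qf n (Hq : qfree (FNot q)).
  exists (FNot q'); split=> // B w HB /=; rewrite -H //; split.
  + by move=> K [a /= Ka]; apply: Ka; rewrite -IH //; apply: K.
  + by move=> K a; rewrite IH //; apply: NNPP => Ka; apply: K; exists a.
- have [q' [Hq' H]] := ex_qf n Hq.
  exists q'; split=> // B w HB /=; rewrite -H //.
  by split=> -[a Ka]; exists a; [rewrite -IH|rewrite IH].
Qed.

End QE.


Section Step.
Variable F : Type.
Variable ar : F -> nat.

Local Notation alg := (Defs.algebra F ar).
Local Notation term := (Defs.term F ar).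
Local Notation form := (Defs.form F ar).
Local Notation eqn := (Defs.eqn F ar).
Local Notation Var := (@Defs.Var F ar _).
Local Notation Cst := (@Defs.Cst F ar _).
Local Notation App := (@Defs.App F ar _).
Local Notation eval := (Defs.eval F ar _ _).
Local Notation sat := (Defs.sat F ar _ _).
Local Notation ops := (Defs.ops F ar).
Local Notation upd := (Defs.upd F ar _).
Local Notation hom := (Defs.hom F ar).
Local Notation embedding := (Defs.embedding F ar).
Local Notation eqn_holds := (Defs.eqn_holds F ar).

Variable c : F.
Hypothesis hc : ar c = 0.

Variable V : alg -> Prop.
Variable Eqs : eqn -> Prop.
Hypothesis HV : forall A, V A <-> (forall p, Eqs p -> forall v : nat -> A, eqn_holds v p).
Hypothesis HAP : AP F ar V.

Lemma prim_sat_ext (B : alg) (w w' : nat -> B) gam dl :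
  (forall n, w n = w' n) -> prim_sat w gam dl -> prim_sat w' gam dl.
Proof. by move=> H; have -> : w = w' by apply: functional_extensionality. Qed.

Lemma prim_sat_emb (B D : alg) (g : B -> D) (w : nat -> B) gam dl :
  embedding g -> prim_sat w gam dl -> prim_sat (fun n => g (w n)) gam dl.
Proof.
case=> Hg Hi [H1 H2]; split.
- by move=> e He; rewrite /Defs.eqn_holds -!(hom_eval_void _ _ Hg) (H1 e He).
- by move=> e He; rewrite /Defs.eqn_holds -!(hom_eval_void _ _ Hg) => /Hi; apply: H2.
Qed.

Lemma emb_comp (A B D : alg) (f : A -> B) (g : B -> D) :
  embedding f -> embedding g -> embedding (fun a => g (f a)).
Proof.
case=> Hf If [Hg Ig]; split; last by move=> x y /Ig /If.
by move=> f0 args; rewrite Hf Hg.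
Qed.

Lemma emb_id (A : alg) : embedding (fun a : A => a).
Proof. by split. Qed.

Definition realizable (A : alg) (gam dl : seq eqn) (y : nat) (w : nat -> A) : Prop :=
  exists (D : alg) (h : A -> D) (d : D), V D /\ embedding h /\
    prim_sat (upd (fun n => h (w n)) y d) gam dl.

Section StepA.
Variable A : alg.
Hypothesis HA : V A.

Record inst := Inst { igam : seq eqn; idl : seq eqn; iy : nat; iw : nat -> A;
                      ireal : realizable igam idl iy iw }.

Lemma multi_amalg (ls : seq inst) : exists (D : alg) (h : A -> D) (d : inst -> D),
  V D /\ embedding h /\ forall i, List.In i ls ->
    prim_sat (upd (fun n => h (iw i n)) (iy i) (d i)) (igam i) (idl i).
Proof.
elim: ls => [|i ls [D1 [h1 [d1 [HD1 [Hh1 IH]]]]]].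
- by exists A, (fun a => a), (fun _ => elt0 hc A); split=> //; split=> //; exact: emb_id.
- have [D2 [h2 [b [HD2 [Hh2 Hb]]]]] := ireal i.
  have [E [g1 [g2 [HE [Hg1 [Hg2 Hcomm]]]]]] := HAP HA HD1 HD2 Hh1 Hh2.
  exists E, (fun a => g1 (h1 a)),
    (fun j => if excluded_middle_informative (j = i) then g2 b else g1 (d1 j)).
  split=> //; split; first exact: emb_comp.
  move=> j Hj; case: (excluded_middle_informative (j = i)) => [Eji|Hji]; first subst j.
  + apply: (prim_sat_ext _ (prim_sat_emb Hg2 Hb)) => n.
    rewrite /Defs.upd; case: eqP => // _; by rewrite Hcomm.
  + have Hj' : List.In j ls by case: Hj => // E'; exfalso; apply: Hji.
    apply: (prim_sat_ext _ (prim_sat_emb Hg1 (IH j Hj'))) => n.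
    by rewrite /Defs.upd; case: eqP.
Qed.

Definition kap (i : inst) (n : nat) : term (A + inst) :=
  if n == iy i then Cst (inr i) else Cst (inl (iw i n)).

Definition tsX (sg : nat -> term (A + inst)) (t : term void) : term (A + inst) :=
  eval (novoid (TA ar (A + inst))) sg t.

Definition Gst : TA ar (A + inst) -> TA ar (A + inst) -> Prop := fun p q =>
  (exists f (args : 'I_(ar f) -> A), p = Cst (inl (ops A f args)) /\ q = App f (fun j => Cst (inl (args j))))
  \/ (exists i e, List.In e (igam i) /\ p = tsX (kap i) e.1 /\ q = tsX (kap i) e.2).

Definition A' : alg := TQ Eqs Gst.
Definition ee (a : A) : A' := tq Eqs Gst (Cst (inl a)).

Definition kap0 (D : alg) (h : A -> D) (d : inst -> D) (x : A + inst) : D :=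
  match x with inl a => h a | inr i => d i end.

Lemma KLc s t : cg (TG Eqs Gst) s t -> exists ls : seq inst,
  forall (D : alg) (h : A -> D) (d : inst -> D), V D -> hom h ->
    (forall i, List.In i ls -> holds_all (upd (fun n => h (iw i n)) (iy i) (d i)) (igam i)) ->
    eval (kap0 h d) (fun _ => h (elt0 hc A)) s = eval (kap0 h d) (fun _ => h (elt0 hc A)) t.
Proof.
move=> H.
have H' : cg (fun p q => (EI Eqs p q \/ (exists f (args : 'I_(ar f) -> A), p = Cst (inl (ops A f args)) /\ q = App f (fun j => Cst (inl (args j)))))
   \/ (exists i e, List.In e (igam i) /\ p = tsX (kap i) e.1 /\ q = tsX (kap i) e.2)) s t.
  by apply: (cg_mono _ H) => p q [K|[K|K]]; [left; left|left; right|right].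
have [L [HL HcL]] := cg_fin H'.
have [ls Hls] : exists ls : seq inst, forall p, List.In p L -> exists i e, List.In i ls /\
     List.In e (igam i) /\ p.1 = tsX (kap i) e.1 /\ p.2 = tsX (kap i) e.2.
  clear HcL; move: L HL; elim=> [|p L IH] HL; first by exists [::].
  have [ls Hls] := IH (fun q Hq => HL q (or_intror Hq)).
  have [i [e [He [E1 E2]]]] := HL p (or_introl erefl).
  exists (i :: ls) => q [<-|Hq]; first by exists i, e; split; [left|].
  have [i' [e' [Hi' K]]] := Hls q Hq; by exists i', e'; split; [right|].
exists ls => D h d HD Hh Hd.
apply: (cg_sound (eval_hom (kap0 h d) (fun _ => h (elt0 hc A))) _ HcL).
move=> p q [[[e [sg [He [-> ->]]]]|[f [args [-> ->]]]]|HpL].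
- rewrite !eval_TA_comp; exact: (V_eqs HV _ HD He).
- by rewrite /= Hh.
- have [i [e [Hi [He [E1 E2]]]]] := Hls (p, q) HpL; rewrite /= in E1 E2; rewrite E1 E2 /tsX !eval_TA_comp.
  have X : forall z, eval (novoid D) (fun n => eval (kap0 h d) (fun _ => h (elt0 hc A)) (kap i n)) z =
                     eval (novoid D) (upd (fun n => h (iw i n)) (iy i) (d i)) z.
    move=> z; apply: eval_ext => n _; rewrite /kap /Defs.upd; by case: eqP.
  rewrite !X; exact: (Hd i Hi e He).
Qed.

Lemma step : exists (A2 : alg) (e : A -> A2), V A2 /\ embedding e /\
  forall gam dl y w, realizable gam dl y w -> exists b, prim_sat (upd (fun n => e (w n)) y b) gam dl.
Proof.
exists A', ee; split; first exact: (TQ_V HV).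
have Hee : hom ee.
  move=> f args; rewrite /ee (@tq_G _ _ Eqs _ Gst (Cst (inl (ops A f args))) (App f (fun j => Cst (inl (args j))))); last by left; exists f, args.
  by rewrite (tq_hom Eqs Gst).
split.
  split=> // a1 a2 /(tq_eq Eqs Gst) /KLc [ls Hls].
  have [D [h [d [HD [[Hh Hi] Hd]]]]] := multi_amalg ls.
  apply: Hi; exact: (Hls D h d HD Hh (fun i Hi => proj1 (Hd i Hi))).
move=> gam dl y w Hr.
pose i := Inst Hr.
exists (tq Eqs Gst (Cst (inr i))).
have Hval : forall t, eval (novoid A') (upd (fun n => ee (w n)) y (tq Eqs Gst (Cst (inr i)))) t = tq Eqs Gst (tsX (kap i) t).
  move=> t; rewrite /tsX -(TQ_eval Eqs Gst t (kap i)); apply: eval_ext => n _.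
  rewrite /kap /Defs.upd /=; by case: eqP.
split.
- move=> e He; rewrite /Defs.eqn_holds !Hval; apply: (tq_G Eqs); right; by exists i, e.
- move=> e He; rewrite /Defs.eqn_holds !Hval => /(tq_eq Eqs Gst) /KLc [ls Hls].
  have [D [h [d [HD [[Hh Hi] Hd]]]]] := multi_amalg (i :: ls).
  have := Hls D h d HD Hh (fun j Hj => proj1 (Hd j (or_intror Hj))).
  rewrite /tsX !eval_TA_comp.
  have X : forall t, eval (novoid D) (fun n => eval (kap0 h d) (fun _ => h (elt0 hc A)) (kap i n)) t =
                     eval (novoid D) (upd (fun n => h (iw i n)) (iy i) (d i)) t.
    move=> t; apply: eval_ext => n _; rewrite /kap /Defs.upd; by case: eqP.
  rewrite !X; exact: (proj2 (Hd i (or_introl erefl)) e He).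
Qed.

End StepA.
End Step.


Section Union.
Variable F : Type.
Variable ar : F -> nat.

Local Notation alg := (Defs.algebra F ar).
Local Notation term := (Defs.term F ar).
Local Notation eqn := (Defs.eqn F ar).
Local Notation eval := (Defs.eval F ar _ _).
Local Notation ops := (Defs.ops F ar).
Local Notation hom := (Defs.hom F ar).
Local Notation embedding := (Defs.embedding F ar).
Local Notation eqn_holds := (Defs.eqn_holds F ar).

Variable c : F.
Hypothesis hc : ar c = 0.

Variable A : nat -> alg.
Variable e : forall n, A n -> A n.+1.
Arguments e : clear implicits.
Hypothesis He : forall n, embedding (e n).

Definition U0 := {n : nat & A n}.

Fixpoint upto (N : nat) (x : U0) : A N :=
  match PeanoNat.Nat.eq_dec (projT1 x) N with
  | left E => eq_rect _ (fun k => A k) (projT2 x) _ E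
  | right _ => match N return A N with
               | 0 => elt0 hc (A 0)
               | N'.+1 => e N' (upto N' x)
               end
  end.

Lemma upto_self n (a : A n) : upto n (existT _ n a) = a.
Proof.
case: n a => [|n] a /=.
- by [].
- case: (PeanoNat.Nat.eq_dec n n) => E /=; last by case: E.
  move: (f_equal_nat _ _ _ _ E) => E'; by rewrite (Eqdep_dec.UIP_refl_nat _ E').
Qed.

Lemma upto_succ N (x : U0) : projT1 x <= N -> upto N.+1 x = e N (upto N x).
Proof.
move=> H /=; case: (PeanoNat.Nat.eq_dec (projT1 x) N.+1) => // E; exfalso; move: H; rewrite E; by rewrite ltnn.
Qed.

Lemma upto_emb n d : embedding (fun a : A n => upto (d + n) (existT _ n a)).
Proof.
elim: d => [|d IH] /=.
- have -> : (fun a : A n => upto (0 + n) (existT _ n a)) = (fun a => a).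
    by apply: functional_extensionality => a; exact: upto_self.
  exact: emb_id.
- have -> : (fun a : A n => upto (d.+1 + n) (existT _ n a)) = (fun a => e (d + n) (upto (d + n) (existT _ n a))).
    apply: functional_extensionality => a; rewrite -upto_succ //=; by rewrite leq_addl.
  exact: (emb_comp IH (He _)).
Qed.

Lemma upto_emb' n N : n <= N -> embedding (fun a : A n => upto N (existT _ n a)).
Proof. by move=> H; rewrite -(subnK H); exact: upto_emb. Qed.

Lemma upto_trans (x : U0) M N : projT1 x <= M -> M <= N ->
  upto N (existT _ M (upto M x)) = upto N x.
Proof.
move=> H1 H2; rewrite -(subnK H2); elim: (N - M) => [|d IH]; first by rewrite add0n upto_self.
rewrite addSn !upto_succ ?IH //=; [exact: (leq_trans H1 (leq_addl _ _))|exact: leq_addl].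
Qed.

Lemma upto_mono (x y : U0) N M : N <= M -> upto N x = upto N y ->
  projT1 x <= N -> projT1 y <= N -> upto M x = upto M y.
Proof.
move=> H E Hx Hy; rewrite -(subnK H); elim: (M - N) => [|d IH]; first by rewrite add0n.
rewrite addSn !upto_succ ?IH //; [exact: (leq_trans Hy (leq_addl _ _))|exact: (leq_trans Hx (leq_addl _ _))].
Qed.

Definition mtag f (args : 'I_(ar f) -> U0) : nat := \max_(i < ar f) projT1 (args i).

Definition U0alg : alg := @Defs.Algebra F ar U0
  (fun f args => existT _ (mtag args) (ops (A (mtag args)) f (fun i => upto (mtag args) (args i)))).

Lemma ops_lift f (args : 'I_(ar f) -> U0) M : mtag args <= M ->
  upto M (existT _ (mtag args) (ops (A (mtag args)) f (fun i => upto (mtag args) (args i))))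
  = ops (A M) f (fun i => upto M (args i)).
Proof.
move=> H; rewrite (proj1 (upto_emb' H)); congr (ops (A M) f).
apply: functional_extensionality => i; apply: upto_trans => //.
rewrite /mtag; exact: (@leq_bigmax _ (fun i => projT1 (args i)) i).
Qed.

Definition ueq (x y : U0) : Prop :=
  exists N, projT1 x <= N /\ projT1 y <= N /\ upto N x = upto N y.

Lemma ueq_at (x y : U0) M : ueq x y -> projT1 x <= M -> projT1 y <= M -> upto M x = upto M y.
Proof.
case=> N [Hx [Hy E]] H1 H2.
have E2 : upto (maxn N M) x = upto (maxn N M) y by apply: (upto_mono (leq_maxl _ _) E).
apply: (proj2 (upto_emb' (leq_maxr N M))); rewrite /= !upto_trans ?leq_maxr //.
Qed.

Lemma ueq_congr : congruence F ar (ueq : U0alg -> U0alg -> Prop).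
Proof.
split; first by move=> x; exists (projT1 x).
split; first by move=> x y [N [H1 [H2 H3]]]; exists N.
split.
  move=> x y z Hxy Hyz; set K := maxn (maxn (projT1 x) (projT1 y)) (projT1 z).
  have Kx : projT1 x <= K by rewrite /K !leq_max leqnn.
  have Ky : projT1 y <= K by rewrite /K !leq_max leqnn !orbT.
  have Kz : projT1 z <= K by rewrite /K !leq_max leqnn !orbT.
  exists K; split=> //; split=> //.
  by rewrite (ueq_at Hxy) // (ueq_at Hyz).
move=> f a b H.
have [Nf HN] : exists Nf : 'I_(ar f) -> nat, forall i, projT1 (a i) <= Nf i /\ projT1 (b i) <= Nf i /\
    upto (Nf i) (a i) = upto (Nf i) (b i).
  apply: (@choice_fun _ _ (fun i N => projT1 (a i) <= N /\ projT1 (b i) <= N /\ upto N (a i) = upto N (b i))) => i.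
  exact: H i.
set M := maxn (maxn (mtag a) (mtag b)) (\max_(i < ar f) Nf i).
exists M; split; first exact: (leq_trans (leq_maxl _ _) (leq_maxl _ _)).
split; first exact: (leq_trans (leq_maxr _ _) (leq_maxl _ _)).
rewrite /= !ops_lift; try solve [exact: (leq_trans (leq_maxl _ _) (leq_maxl _ _))|exact: (leq_trans (leq_maxr _ _) (leq_maxl _ _))].
congr (ops (A M) f); apply: functional_extensionality => i.
have [H1 [H2 H3]] := HN i.
have HNi : Nf i <= M by apply: (leq_trans _ (leq_maxr _ _)); exact: (@leq_bigmax _ Nf i).
exact: (upto_mono HNi H3).
Qed.

Definition ueqU : U0alg -> U0alg -> Prop := ueq.
Definition ueqU_congr : congruence F ar ueqU := ueq_congr.

Definition U : alg := qalg ueqU.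
Definition ins n (a : A n) : U := qpi ueqU (existT _ n a : U0alg).

Lemma ins_eq (x y : U0) : qpi ueqU x = qpi ueqU y <-> ueq x y.
Proof. exact: (qpi_eq ueqU_congr). Qed.

Lemma ins_emb n : embedding (@ins n).
Proof.
split.
- move=> f args; rewrite /ins -(qpi_hom ueqU_congr); apply/ins_eq.
  exists (maxn n (mtag (fun i => existT _ n (args i) : U0))); split; first exact: leq_maxl.
  split; first exact: leq_maxr.
  rewrite ops_lift ?leq_maxr // (proj1 (upto_emb' (leq_maxl _ _))).
  by [].
- move=> a b /ins_eq H; apply: (proj2 (upto_emb' (leqnn n))).
  by rewrite /=; apply: (ueq_at H).
Qed.

Lemma ins_succ n (a : A n) : ins (e n a) = ins a.
Proof.
apply/ins_eq; exists n.+1; split=> //; split=> //.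
by rewrite upto_self upto_succ // upto_self.
Qed.

Lemma ins_upto (x : U0) N : projT1 x <= N -> ins (upto N x) = qpi ueqU (x : U0alg).
Proof.
move=> H; apply/ins_eq; exists N; split=> //; split=> //.
by rewrite upto_self.
Qed.

Lemma U_surj (z : U) : exists n (a : A n), z = ins a.
Proof.
case: (qpi_surj z) => [[n a] ->]; by exists n, a.
Qed.

Lemma eval_U0 (w : nat -> U0alg) (t : term void) M :
  (forall n, Defs.toccurs F ar n t -> projT1 (w n) <= M) ->
  projT1 (eval (novoid U0alg) w t) <= M /\
  upto M (eval (novoid U0alg) w t) = eval (novoid (A M)) (fun n => upto M (w n)) t.
Proof.
elim: t => [n|[]|f args IH] /= H; first by split=> //; apply: H.
have K : forall i, projT1 (eval (novoid U0alg) w (args i)) <= M /\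
   upto M (eval (novoid U0alg) w (args i)) = eval (novoid (A M)) (fun n => upto M (w n)) (args i).
  by move=> i; apply: IH => n Hn; apply: H; exists i.
have Hm : mtag (fun i => eval (novoid U0alg) w (args i)) <= M.
  by apply/bigmax_leqP => i _; exact: (proj1 (K i)).
split=> //; rewrite ops_lift //; congr (ops (A M) f).
by apply: functional_extensionality => i; exact: (proj2 (K i)).
Qed.

Variable V : alg -> Prop.
Variable Eqs : eqn -> Prop.
Hypothesis HV : forall A, V A <-> (forall p, Eqs p -> forall v : nat -> A, eqn_holds v p).
Hypothesis HAV : forall n, V (A n).

Lemma U_V : V U.
Proof.
apply: (V_quot HV ueqU_congr) => p w Hp.
set M := \max_(n <- tvars p.1 ++ tvars p.2) projT1 (w n).
have H1 : forall n, Defs.toccurs F ar n p.1 -> projT1 (w n) <= M.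
  move=> n /tvarsP Hn; apply: (@leq_bigmax_seq _ _ xpredT (fun n => projT1 (w n))) => //.
  by rewrite mem_cat Hn.
have H2 : forall n, Defs.toccurs F ar n p.2 -> projT1 (w n) <= M.
  move=> n /tvarsP Hn; apply: (@leq_bigmax_seq _ _ xpredT (fun n => projT1 (w n))) => //.
  by rewrite mem_cat Hn orbT.
have [K1 E1] := eval_U0 H1; have [K2 E2] := eval_U0 H2.
exists M; split=> //; split=> //; rewrite E1 E2.
exact: (V_eqs HV _ (HAV M) Hp).
Qed.

Lemma union_rep (ns : seq nat) (v : nat -> U) : exists N (w : nat -> A N),
  forall n, n \in ns -> v n = ins (w n).
Proof.
have [r Hr] : exists r : nat -> U0alg, forall n, v n = qpi ueqU (r n).
  apply: (@choice_fun _ _ (fun n x => v n = qpi ueqU x)) => n; exact: qpi_surj.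
exists (\max_(n <- ns) projT1 (r n)), (fun n => upto (\max_(n <- ns) projT1 (r n)) (r n)).
move=> n Hn; rewrite ins_upto ?Hr //.
exact: (@leq_bigmax_seq _ _ xpredT (fun n => projT1 (r n))).
Qed.

End Union.


Section Chain.
Variable F : Type.
Variable ar : F -> nat.

Local Notation alg := (Defs.algebra F ar).
Local Notation eqn := (Defs.eqn F ar).
Local Notation eval := (Defs.eval F ar _ _).
Local Notation upd := (Defs.upd F ar _).
Local Notation embedding := (Defs.embedding F ar).
Local Notation eqn_holds := (Defs.eqn_holds F ar).
Local Notation eqns_vars_in := (Defs.eqns_vars_in F ar).

Variable c : F.
Hypothesis hc : ar c = 0.
Variable V : alg -> Prop.
Variable Eqs : eqn -> Prop.
Hypothesis HV : forall A, V A <-> (forall p, Eqs p -> forall v : nat -> A, eqn_holds v p).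
Hypothesis HAP : AP F ar V.

Lemma prim_sat_vars (B : alg) (w w' : nat -> B) gam dl :
  (forall n, n \in evars (gam ++ dl) -> w n = w' n) -> prim_sat w gam dl -> prim_sat w' gam dl.
Proof.
move=> H [H1 H2].
have HX : forall E, (forall e, List.In e E -> List.In e (gam ++ dl)) ->
    eqns_vars_in (fun n => n \in evars (gam ++ dl)) E.
  move=> E HE e He; split=> n Hn; apply: (evarsP (HE e He)); by [left|right].
have Hg := HX gam (fun e He => List.in_or_app _ _ _ (or_introl He)).
have Hd := HX dl (fun e He => List.in_or_app _ _ _ (or_intror He)).
split; first by apply/(holds_all_ext Hg H).
move=> e He K; apply: (H2 e He).
have Hd1 : eqns_vars_in (fun n => n \in evars (gam ++ dl)) [:: e] by move=> e' [<-|//]; apply: Hd.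
have := (proj2 (holds_all_ext Hd1 H)) (fun e' He' => ltac:(case: He' => [<-|//]; exact: K)).
by apply; left.
Qed.

Theorem ec_ext (M : alg) : V M -> exists (B : alg) (h : M -> B), KK V B /\ embedding h.
Proof.
move=> HM.
pose VA := {B : alg | V B}.
have stepf : forall X : VA, {Y : VA & {e : proj1_sig X -> proj1_sig Y | embedding e /\
    forall gam dl y w, realizable V gam dl y w -> exists b, prim_sat (upd (fun n => e (w n)) y b) gam dl}}.
  move=> [X HX].
  have H := step hc HV HAP HX.
  case: (constructive_indefinite_description _ H) => A2 H2.
  case: (constructive_indefinite_description _ H2) => e [HA2 [He Hr]].
  by exists (exist _ A2 HA2); exists e.
pose chain := fix chain (n : nat) : VA := match n with 0 => exist _ M HM | n'.+1 => projT1 (stepf (chain n')) end.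
pose A := fun n => proj1_sig (chain n).
pose en := fun n => (proj1_sig (projT2 (stepf (chain n))) : A n -> A n.+1).
have He : forall n, embedding (en n) by move=> n; exact: (proj1 (proj2_sig (projT2 (stepf (chain n))))).
have HAV : forall n, V (A n) by move=> n; exact: (proj2_sig (chain n)).
exists (U hc en), (@ins _ _ _ hc A en 0); split; last exact: (ins_emb hc He 0).
split; first exact: (U_V hc He HV HAV).
move=> gam dl y v [D [h [d [HD [Hh Hp]]]]].
have [N [w Hw]] := union_rep He (evars (gam ++ dl)) v.
have Hr : realizable V gam dl y w.
  exists D, (fun a => h (ins hc en a)), d; split=> //; split; first exact: (emb_comp (ins_emb hc He N) Hh).
  apply: (prim_sat_vars _ Hp) => n Hn; rewrite /Defs.upd; case: eqP => // _; by rewrite Hw.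
have [b Hb] := proj2 (proj2_sig (projT2 (stepf (chain N)))) gam dl y w Hr.
exists (@ins _ _ _ hc A en N.+1 b).
have := prim_sat_emb (ins_emb hc He N.+1) Hb.
apply: prim_sat_vars => n Hn; rewrite /Defs.upd; case: eqP => // _.
by rewrite (ins_succ hc He) Hw.
Qed.

End Chain.


Section Syn.
Variable F : Type.
Variable ar : F -> nat.

Local Notation alg := (Defs.algebra F ar).
Local Notation term := (Defs.term F ar).
Local Notation form := (Defs.form F ar).
Local Notation eqn := (Defs.eqn F ar).
Local Notation Var := (@Defs.Var F ar _).
Local Notation Cst := (@Defs.Cst F ar _).
Local Notation App := (@Defs.App F ar _).
Local Notation eval := (Defs.eval F ar _ _).
Local Notation sat := (Defs.sat F ar _ _).
Local Notation ops := (Defs.ops F ar).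
Local Notation upd := (Defs.upd F ar _).
Local Notation hom := (Defs.hom F ar).
Local Notation embedding := (Defs.embedding F ar).
Local Notation toccurs := (Defs.toccurs F ar).
Local Notation ffree := (Defs.ffree F ar).
Local Notation qfree := (Defs.qfree F ar).
Local Notation FEq := (@Defs.FEq F ar _).
Local Notation FNot := (@Defs.FNot F ar _).
Local Notation FAnd := (@Defs.FAnd F ar _).
Local Notation FOr := (@Defs.FOr F ar _).
Local Notation FImp := (@Defs.FImp F ar _).
Local Notation FAll := (@Defs.FAll F ar _).
Local Notation FEx := (@Defs.FEx F ar _).

Fixpoint allvars C (p : form C) : seq nat :=
  match p with
  | Defs.FEq t1 t2 => tvars t1 ++ tvars t2
  | Defs.FNot q => allvars q
  | Defs.FAnd q r | Defs.FOr q r | Defs.FImp q r => allvars q ++ allvars r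
  | Defs.FAll n q | Defs.FEx n q => n :: allvars q
  end.

Lemma ffree_allvars C (p : form C) n : ffree n p -> n \in allvars p.
Proof.
elim: p => [t1 t2|q IH|q IHq r IHr|q IHq r IHr|q IHq r IHr|m q IH|m q IH] /=.
- by case=> /tvarsP H; rewrite mem_cat H ?orbT.
- exact: IH.
- by case=> [/IHq|/IHr] H; rewrite mem_cat H ?orbT.
- by case=> [/IHq|/IHr] H; rewrite mem_cat H ?orbT.
- by case=> [/IHq|/IHr] H; rewrite mem_cat H ?orbT.
- by case=> _ /IH H; rewrite inE H orbT.
- by case=> _ /IH H; rewrite inE H orbT.
Qed.

Definition close C (p : form C) : form C := foldr (fun n q => FAll n q) p (allvars p).

Lemma foldr_free C (p : form C) l n : ffree n (foldr (fun n q => FAll n q) p l) -> ffree n p /\ n \notin l.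
Proof.
elim: l => [|m l IH] /=; first by [].
case=> Hmn /IH [H1 H2]; split=> //; rewrite inE negb_or H2 andbT; apply/eqP => E; by apply: Hmn.
Qed.

Lemma close_sentence C (p : form C) : sentence F ar (close p).
Proof. by move=> n /foldr_free [/ffree_allvars H1]; rewrite H1. Qed.

Lemma foldr_sat (A : alg) C (k : C -> A) (p : form C) l : forall v,
  sat k v (foldr (fun n q => FAll n q) p l) ->
  forall v', (forall n, ffree n p -> n \notin l -> v' n = v n) -> sat k v' p.
Proof.
elim: l => [|m l IH] v /= H v' Hv'.
- apply/(sat_ext k (w:=v)); last exact: H.
  by move=> n Hn; apply: Hv'.
- apply: (IH _ (H (v' m))) => n Hn Hnl; rewrite /Defs.upd; case: eqP => [->//|Hnm].
  by apply: Hv' => //; rewrite inE negb_or Hnl andbT; apply/eqP.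
Qed.

Lemma close_sat1 (A : alg) C (k : C -> A) (p : form C) v :
  sat k v (close p) -> forall v', sat k v' p.
Proof. move=> H v'; apply: (foldr_sat H) => n /ffree_allvars Hn; by rewrite Hn. Qed.

Lemma close_sat2 (A : alg) C (k : C -> A) (p : form C) :
  (forall v, sat k v p) -> forall v, sat k v (close p).
Proof. by move=> H; rewrite /close; elim: (allvars p) => [|m l IH] //= v a. Qed.

Lemma sentence_sat (A : alg) C (k : C -> A) (p : form C) v v' :
  sentence F ar p -> sat k v p -> sat k v' p.
Proof. by move=> Hs; apply: (proj1 (@sat_ext F ar A C k p v v' (fun n Hn => False_ind _ (Hs n Hn)))). Qed.


Fixpoint cst_at C (t : term C) (q : seq nat) {struct t} : option C :=
  match q, t with
  | [::], Defs.Cst m => Some m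
  | i :: q', Defs.App f args =>
      match (insub i : option 'I_(ar f)) with Some j => cst_at (args j) q' | None => None end
  | _, _ => None
  end.

Fixpoint abs_t C (e : seq nat -> nat) (t : term C) {struct t} : term void :=
  match t with
  | Defs.Var n => Var n
  | Defs.Cst _ => Var (e [::])
  | Defs.App f args => App f (fun j => abs_t (fun q => e (val j :: q)) (args j))
  end.

Lemma abs_t_eval (A : alg) C (k : C -> A) (w : nat -> A) (t : term C) : forall e,
  (forall q m, cst_at t q = Some m -> w (e q) = k m) ->
  eval k w t = eval (novoid A) w (abs_t e t).
Proof.
elim: t => [n|m|f args IH] e H //=.
- by rewrite (H [::] m).
- congr (ops A f); apply: functional_extensionality => j; apply: IH => q m Hq.
  by apply: (H (val j :: q)); rewrite /= valK.
Qed.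

Fixpoint cst_at_f C (p : form C) (q : seq nat) {struct p} : option C :=
  match p, q with
  | Defs.FEq t1 t2, 0 :: q' => cst_at t1 q'
  | Defs.FEq t1 t2, 1 :: q' => cst_at t2 q'
  | Defs.FNot p', _ => cst_at_f p' q
  | Defs.FAnd p1 p2, 0 :: q' => cst_at_f p1 q'
  | Defs.FAnd p1 p2, 1 :: q' => cst_at_f p2 q'
  | Defs.FOr p1 p2, 0 :: q' => cst_at_f p1 q'
  | Defs.FOr p1 p2, 1 :: q' => cst_at_f p2 q'
  | Defs.FImp p1 p2, 0 :: q' => cst_at_f p1 q'
  | Defs.FImp p1 p2, 1 :: q' => cst_at_f p2 q'
  | Defs.FAll _ p', _ => cst_at_f p' q
  | Defs.FEx _ p', _ => cst_at_f p' q
  | _, _ => None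
  end.

Fixpoint abs_f C (e : seq nat -> nat) (p : form C) {struct p} : form void :=
  match p with
  | Defs.FEq t1 t2 => FEq (abs_t (fun q => e (0 :: q)) t1) (abs_t (fun q => e (1 :: q)) t2)
  | Defs.FNot p' => FNot (abs_f e p')
  | Defs.FAnd p1 p2 => FAnd (abs_f (fun q => e (0 :: q)) p1) (abs_f (fun q => e (1 :: q)) p2)
  | Defs.FOr p1 p2 => FOr (abs_f (fun q => e (0 :: q)) p1) (abs_f (fun q => e (1 :: q)) p2)
  | Defs.FImp p1 p2 => FImp (abs_f (fun q => e (0 :: q)) p1) (abs_f (fun q => e (1 :: q)) p2)
  | Defs.FAll n p' => FAll n (abs_f e p')
  | Defs.FEx n p' => FEx n (abs_f e p')
  end.

Lemma abs_f_sat (A : alg) C (k : C -> A) (p : form C) : forall e w,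
  (forall q, e q \notin allvars p) ->
  (forall q m, cst_at_f p q = Some m -> w (e q) = k m) ->
  (sat k w p <-> sat (novoid A) w (abs_f e p)).
Proof.
elim: p => [t1 t2|p IH|p1 IH1 p2 IH2|p1 IH1 p2 IH2|p1 IH1 p2 IH2|n p IH|n p IH] e w He H /=.
- have C1 : forall q m, cst_at t1 q = Some m -> w (e (0 :: q)) = k m by move=> q m Hq; apply: (H (0 :: q)).
  have C2 : forall q m, cst_at t2 q = Some m -> w (e (1 :: q)) = k m by move=> q m Hq; apply: (H (1 :: q)).
  by rewrite -(abs_t_eval C1) -(abs_t_eval C2).
- by rewrite (IH e w).
- have He1 : forall q, e (0 :: q) \notin allvars p1 by move=> q; move: (He (0 :: q)); rewrite mem_cat negb_or => /andP [].
  have He2 : forall q, e (1 :: q) \notin allvars p2 by move=> q; move: (He (1 :: q)); rewrite mem_cat negb_or => /andP [].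
  have C1 : forall q m, cst_at_f p1 q = Some m -> w (e (0 :: q)) = k m by move=> q m Hq; apply: (H (0 :: q)).
  have C2 : forall q m, cst_at_f p2 q = Some m -> w (e (1 :: q)) = k m by move=> q m Hq; apply: (H (1 :: q)).
  by rewrite (IH1 _ w He1 C1) (IH2 _ w He2 C2).
- have He1 : forall q, e (0 :: q) \notin allvars p1 by move=> q; move: (He (0 :: q)); rewrite mem_cat negb_or => /andP [].
  have He2 : forall q, e (1 :: q) \notin allvars p2 by move=> q; move: (He (1 :: q)); rewrite mem_cat negb_or => /andP [].
  have C1 : forall q m, cst_at_f p1 q = Some m -> w (e (0 :: q)) = k m by move=> q m Hq; apply: (H (0 :: q)).
  have C2 : forall q m, cst_at_f p2 q = Some m -> w (e (1 :: q)) = k m by move=> q m Hq; apply: (H (1 :: q)).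
  by rewrite (IH1 _ w He1 C1) (IH2 _ w He2 C2).
- have He1 : forall q, e (0 :: q) \notin allvars p1 by move=> q; move: (He (0 :: q)); rewrite mem_cat negb_or => /andP [].
  have He2 : forall q, e (1 :: q) \notin allvars p2 by move=> q; move: (He (1 :: q)); rewrite mem_cat negb_or => /andP [].
  have C1 : forall q m, cst_at_f p1 q = Some m -> w (e (0 :: q)) = k m by move=> q m Hq; apply: (H (0 :: q)).
  have C2 : forall q m, cst_at_f p2 q = Some m -> w (e (1 :: q)) = k m by move=> q m Hq; apply: (H (1 :: q)).
  by rewrite (IH1 _ w He1 C1) (IH2 _ w He2 C2).
- have He' : forall q, e q \notin allvars p by move=> q; move: (He q); rewrite inE negb_or => /andP [].
  have Hn : forall q, e q != n by move=> q; move: (He q); rewrite inE negb_or => /andP [].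
  split=> K a; [rewrite -(IH e)|rewrite (IH e)]; try exact: K; try done;
   by move=> q m Hq; rewrite /Defs.upd (negbTE (Hn q)); apply: H.
- have He' : forall q, e q \notin allvars p by move=> q; move: (He q); rewrite inE negb_or => /andP [].
  have Hn : forall q, e q != n by move=> q; move: (He q); rewrite inE negb_or => /andP [].
  split=> -[a K]; exists a; [rewrite -(IH e)|rewrite (IH e)]; try exact: K; try done;
   by move=> q m Hq; rewrite /Defs.upd (negbTE (Hn q)); apply: H.
Qed.

End Syn.


Section Main.
Variable F : Type.
Variable ar : F -> nat.

Local Notation alg := (Defs.algebra F ar).
Local Notation term := (Defs.term F ar).
Local Notation form := (Defs.form F ar).
Local Notation eqn := (Defs.eqn F ar).
Local Notation Var := (@Defs.Var F ar _).
Local Notation Cst := (@Defs.Cst F ar _).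
Local Notation App := (@Defs.App F ar _).
Local Notation eval := (Defs.eval F ar _ _).
Local Notation sat := (Defs.sat F ar _ _).
Local Notation ops := (Defs.ops F ar).
Local Notation upd := (Defs.upd F ar _).
Local Notation hom := (Defs.hom F ar).
Local Notation embedding := (Defs.embedding F ar).
Local Notation toccurs := (Defs.toccurs F ar).
Local Notation ffree := (Defs.ffree F ar).
Local Notation qfree := (Defs.qfree F ar).
Local Notation eqn_holds := (Defs.eqn_holds F ar).
Local Notation FEq := (@Defs.FEq F ar _).
Local Notation FNot := (@Defs.FNot F ar _).
Local Notation FAnd := (@Defs.FAnd F ar _).
Local Notation FOr := (@Defs.FOr F ar _).
Local Notation FImp := (@Defs.FImp F ar _).
Local Notation FAll := (@Defs.FAll F ar _).
Local Notation FEx := (@Defs.FEx F ar _).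

Lemma tmap_eval (A : alg) C D (g : C -> D) (k : D -> A) v (t : term C) :
  eval k v (tmap F ar g t) = eval (fun x => k (g x)) v t.
Proof. elim: t => //= f args IH; congr (ops A f); apply: functional_extensionality => i; exact: IH. Qed.

Lemma fmap_sat (A : alg) C D (g : C -> D) (k : D -> A) (p : form C) : forall v,
  sat k v (fmap F ar g p) <-> sat (fun x => k (g x)) v p.
Proof.
elim: p => [t1 t2|q IH|q IHq r IHr|q IHq r IHr|q IHq r IHr|n q IH|n q IH] v /=.
- by rewrite !tmap_eval.
- by rewrite IH.
- by rewrite IHq IHr.
- by rewrite IHq IHr.
- by rewrite IHq IHr.
- by split=> K a; apply/IH.
- by split=> -[a K]; exists a; apply/IH.
Qed.

Lemma sat_void' (A : alg) (k k' : void -> A) (p : form void) v : sat k v p -> sat k' v p.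
Proof. by apply: (proj1 (@sat_void F ar A k k' p v)). Qed.
Arguments sat_void' [A] k [k' p v].

Lemma sentence_sat_iff (A : alg) C (k : C -> A) (p : form C) v v' :
  sentence F ar p -> (sat k v p <-> sat k v' p).
Proof. by move=> Hs; split; apply: sentence_sat. Qed.

Lemma toccurs_inst X (sg : nat -> term X) (t : term void) n :
  toccurs n (eval (novoid (TA ar X)) sg t) -> exists m, toccurs n (sg m).
Proof. elim: t => [m|[]|f args IH] /=; first by move=> H; exists m. by case=> i /IH. Qed.

Lemma diag_qf (M A : alg) (k : M -> A) (u : nat -> M) (q : form void) :
  models_th F ar (diagram F ar M) A k -> qfree q ->
  (sat (novoid A) (fun n => k (u n)) q <-> sat (novoid M) u q).
Proof.
move=> H; elim: q => [t1 t2|q IH|q IHq r IHr|q IHq r IHr|q IHq r IHr|n q IH|n q IH] //=.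
- move=> _.
  pose i := fun t : term void => eval (novoid (TA ar M)) (fun n => Cst (u n)) t.
  have Hi1 : forall v t, eval k v (i t) = eval (novoid A) (fun n => k (u n)) t.
    by move=> v t; rewrite /i eval_TA_comp.
  have Hi2 : forall v t, eval (fun x : M => x) v (i t) = eval (novoid M) u t.
    by move=> v t; rewrite /i eval_TA_comp.
  have Hs : forall t, forall n, ~ toccurs n (i t) by move=> t n /toccurs_inst [m].
  pose v0 := fun _ : nat => k (u 0).
  case: (classic (eval (novoid M) u t1 = eval (novoid M) u t2)) => E.
  + have Hd : diagram F ar M (FEq (i t1) (i t2)).
      split; first by move=> n [/Hs|/Hs].
      split; first by exists (i t1), (i t2); left.
      by move=> v /=; rewrite !Hi2.
    by have := H _ Hd v0; rewrite /= !Hi1 => K; split.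
  + have Hd : diagram F ar M (FNot (FEq (i t1) (i t2))).
      split; first by move=> n [/Hs|/Hs].
      split; first by exists (i t1), (i t2); right.
      by move=> v /=; rewrite !Hi2.
    by have := H _ Hd v0; rewrite /= !Hi1 => K; split.
- by move=> /IH ->.
- by case=> /IHq -> /IHr ->.
- by case=> /IHq -> /IHr ->.
- by case=> /IHq -> /IHr ->.
Qed.

Variable c : F.
Hypothesis hc : ar c = 0.
Variable V : alg -> Prop.
Variable Eqs : eqn -> Prop.
Hypothesis HV : forall A, V A <-> (forall p, Eqs p -> forall v : nat -> A, eqn_holds v p).
Variable alpha : seq eqn.
Hypothesis Halpha_vars : Defs.eqns_vars_in F ar (fun n => n < 4) alpha.
Hypothesis Halpha : forall A, V A -> forall a1 a2 b1 b2 : A,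
      in_Cg F ar b1 b2 a1 a2 <->
      sat (novoid A) (fun n => nth a1 [:: a1; a2; b1; b2] n) (Defs.conj_eqs F ar alpha).
Hypothesis Hcoh : coherent F ar V.
Hypothesis HAP : AP F ar V.
Hypothesis HEVRP : EVRP F ar c hc V.

Definition Ts : form void -> Prop := fun p =>
  sentence F ar p /\ forall B, KK V B -> forall v, sat (novoid B) v p.

Lemma ThV_V (M : alg) : Lmodel F ar (ThV F ar V) M -> V M.
Proof.
move=> HM; apply/HV => e He v.
have Hs : ThV F ar V (close (FEq e.1 e.2)).
  split; first exact: close_sentence.
  move=> A HA w; apply: close_sat2 => w'; exact: (V_eqs HV _ HA He).
exact: (close_sat1 (HM _ Hs v) v).
Qed.

Lemma ThV_Ts p : ThV F ar V p -> Ts p.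
Proof. by case=> Hs Hm; split=> // B [HB _]; apply: Hm. Qed.

Lemma KK_Ts (B : alg) : KK V B -> Lmodel F ar Ts B.
Proof. by move=> HB p [_ Hp]; apply: Hp. Qed.

Lemma QE_Ts (p : form void) : exists q, qfree q /\ forall (B : alg), Lmodel F ar Ts B ->
  forall v, sat (novoid B) v p <-> sat (novoid B) v q.
Proof.
have [q [Hq H]] := QE HV Halpha_vars Halpha Hcoh HAP HEVRP p.
exists q; split=> // B HB v.
have Hs : Ts (close (FAnd (FImp p q) (FImp q p))).
  split; first exact: close_sentence.
  move=> B' HB' w; apply: close_sat2 => w' /=; rewrite (H B' w' HB'); by split=> K.
have := close_sat1 (HB _ Hs v) v; rewrite /=; tauto.
Qed.

Lemma Ts_mc : model_complete F ar Ts.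
Proof.
move=> A B h HA HB Hh p v.
have [q [Hq H]] := QE_Ts p.
rewrite (H A HA v) (H B HB (fun n => h (v n))).
have Hk : forall x : void, h (novoid A x) = novoid B x by case.
exact: (emb_qf v Hh Hk Hq).
Qed.

Lemma univ_down (A B : alg) (h : A -> B) (p : form void) : embedding h -> universal F ar p ->
  (forall v, sat (novoid B) v p) -> forall v, sat (novoid A) v p.
Proof.
move=> Hh; elim=> [q Hq|n q _ IH] HB v.
- have Hk : forall x : void, h (novoid A x) = novoid B x by case.
  apply/(emb_qf v Hh Hk Hq); exact: HB.
- move=> a /=; apply: IH => v'.
  have := HB v' (v' n).
  have -> : upd v' n (v' n) = v' by apply: functional_extensionality => m; rewrite /Defs.upd; case: eqP => [->|].
  done.
Qed.

Lemma Ts_univ p : sentence F ar p -> universal F ar p ->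
  (entails F ar (ThV F ar V) p <-> entails F ar Ts p).
Proof.
move=> Hs Hu; split.
- move=> H A k HA v; apply: H => q /ThV_Ts Hq; exact: HA.
- move=> H A k HA v.
  have HA' : Lmodel F ar (ThV F ar V) A by move=> q Hq w; apply: (sat_void' k); apply: HA.
  have HVA := ThV_V HA'.
  have [B [h [HB Hh]]] := ec_ext hc HV HAP HVA.
  apply: (sat_void' (novoid A)).
  apply: (univ_down Hh Hu) => w.
  apply: (H B (novoid B)) => q Hq w'; exact: (KK_Ts HB Hq w').
Qed.

Lemma Ts_complete (M : alg) : Lmodel F ar (ThV F ar V) M -> complete_th F ar (th_plus_diagram F ar Ts M).
Proof.
move=> HM; have HVM := ThV_V HM.
have Hfm : forall (A : alg) (k : M -> A), models_th F ar (th_plus_diagram F ar Ts M) A k -> Lmodel F ar Ts A.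
  move=> A k H q Hq v; have := H (fmap F ar (novoid M) q) (or_introl (ex_intro _ q (conj Hq erefl))) v.
  by rewrite fmap_sat; apply: sat_void'.
have Hdg : forall (A : alg) (k : M -> A), models_th F ar (th_plus_diagram F ar Ts M) A k ->
    models_th F ar (diagram F ar M) A k.
  by move=> A k H p Hp; apply: H; right.
split.
- have [B [h [HB Hh]]] := ec_ext hc HV HAP HVM.
  exists B, h => p [[q [Hq ->]]|[Hs [[t1 [t2 Ht]] Hp]]] v.
  + rewrite fmap_sat; apply: (sat_void' (novoid B)); exact: (KK_Ts HB Hq).
  + have Hqf : qfree p by case: Ht => ->.
    pose w0 := fun _ : nat => elt0 hc M.
    apply: (sentence_sat (v:=fun n => h (w0 n))) => //.
    apply/(emb_qf w0 Hh (k:=fun x => x) (fun x => erefl) Hqf); exact: Hp.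
- move=> p Hs.
  pose Bnd := (\max_(n <- allvars p) n).+1.
  have HB : forall n, n \in allvars p -> n < Bnd.
    by move=> n Hn; rewrite ltnS; exact: (@leq_bigmax_seq _ _ xpredT id n).
  pose e := fun q : seq nat => Bnd + pickle q.
  have He : forall q, e q \notin allvars p by move=> q; apply/negP => /HB; rewrite /e ltnNge leq_addr.
  pose m0 := elt0 hc M.
  pose u := fun x => if Bnd <= x then (match unpickle (x - Bnd) with
       Some q => match cst_at_f p q with Some m => m | None => m0 end | None => m0 end) else m0.
  have Hu : forall (A : alg) (k : M -> A) q m, cst_at_f p q = Some m -> k (u (e q)) = k m.
    by move=> A k q m Hq; rewrite /u /e leq_addr addKn pickleK Hq.
  have [q [Hq HQ]] := QE_Ts (abs_f e p).
  have Key : forall (A : alg) (k : M -> A), models_th F ar (th_plus_diagram F ar Ts M) A k ->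
      forall v, sat k v p <-> sat (novoid M) u q.
    move=> A k H v.
    rewrite (sentence_sat_iff k v (fun x => k (u x)) Hs) (abs_f_sat He (Hu A k)) (HQ A (Hfm A k H)).
    exact: (diag_qf u (Hdg A k H) Hq).
  case: (classic (sat (novoid M) u q)) => K; [left|right] => A k H v /=.
  + by rewrite (Key A k H).
  + by rewrite (Key A k H).
Qed.

End Main.

Theorem proposition4p7 (F : Type) (ar : F -> nat) (c : F) (hc : ar c = 0)
  (V : algebra F ar -> Prop) :
  is_variety F ar V -> EDPC F ar V -> coherent F ar V -> AP F ar V ->
  EVRP F ar c hc V ->
  has_model_completion F ar (ThV F ar V).
Proof.
move=> [Eqs HV] [alpha [Hav Halpha]] Hcoh HAP HEVRP.
exists (Ts V); split; first by move=> p [].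
split; first exact: (Ts_mc HV Hav Halpha Hcoh HAP HEVRP).
split; first by move=> p Hs Hu; exact: (Ts_univ hc HV HAP Hs Hu).
by move=> M HM; exact: (Ts_complete HV Hav Halpha Hcoh HAP HEVRP HM).
Qed.
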